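(* Let $n\in\mathbb{N}$, $n\ge2$, and $\lambda\in(2n-1,2n)$. If $\phi(x)=1$, or $\phi(x)=(1-x^p)^q$ with $p\ge1$ and $q>0$, then the scheme $S_{1,\mathbf{w}^\lambda}$ is $\mathcal{C}^1$, i.e. it is uniformly convergent and every limit function $S^\infty_{1,\mathbf{w}^\lambda}\mathbf{f}^0$ (for bounded initial data $\mathbf{f}^0$) is continuously differentiable.
   Context: Put $w^\lambda_m=\phi(|m|/\lambda)$ for $m\in\mathbb{Z}$, $|m|<\lambda$, and $M_i=\{m\in\mathbb{Z}: m\equiv i \pmod 2,\ |m|<\lambda\}$, $i\in\{0,1\}$. The scheme $S_{1,\mathbf{w}^\lambda}$ (weighted local polynomial regression scheme of degree 1, which coincides with degree 0) is \[ (S_{1,\mathbf{w}^\lambda}\mathbf{f})_{2j+i}=\frac{\sum_{m\in M_i} w^\lambda_m f_{j+(m+i)/2}}{\sum_{m\in M_i} w^\lambda_m},\qquad i\in\{0,1\},\ j\in\mathbb{Z}. \] Uniform convergence: for every bounded $\mathbf{f}^0$ there is a continuous $F=S^\infty\mathbf{f}^0$ with $\lim_{k\to\infty}\sup_j|(S^k\mathbf{f}^0)_j-F(2^{-k}j)|=0$. *)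

(* Defs.v *)
From Stdlib Require Import Reals Lra ZArith List.
From Coquelicot Require Import Coquelicot.
Open Scope R_scope.

(* Real power x^y for x >= 0 (with 0^y = 0, used only for y > 0). *)
Definition rpow (x y : R) : R :=
  if Rle_dec x 0 then 0 else Rpower x y.

Definition zseq := Z -> R.

(* Candidate integers m with |m| <= up lambda, i.e. a superset of {m : |m| < lambda}. *)
Definition zrange (K : Z) : list Z :=
  map (fun k => (Z.of_nat k - K)%Z) (seq 0 (Z.to_nat (2 * K + 1))).

Definition Mset (lambda : R) (i : Z) : list Z :=
  filter (fun m => (Z.eqb (Z.modulo m 2) i) &&
                   (if Rlt_dec (Rabs (IZR m)) lambda then true else false))%bool
         (zrange (up lambda)).

Definition wgt (phi : R -> R) (lambda : R) (m : Z) : R :=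
  phi (Rabs (IZR m) / lambda).

Definition sumZ (l : list Z) (g : Z -> R) : R :=
  fold_right (fun m acc => g m + acc) 0 l.

Definition S1 (phi : R -> R) (lambda : R) (f : zseq) : zseq :=
  fun k =>
    let j := Z.div k 2 in
    let i := Z.modulo k 2 in
    sumZ (Mset lambda i) (fun m => wgt phi lambda m * f (j + Z.div (m + i) 2)%Z)
    / sumZ (Mset lambda i) (fun m => wgt phi lambda m).

Definition bounded_seq (f : zseq) : Prop :=
  exists B, forall j, Rabs (f j) <= B.

Definition is_limit_function (S : zseq -> zseq) (f0 : zseq) (F : R -> R) : Prop :=
  (forall x, continuous F x) /\
  forall eps, 0 < eps -> exists K : nat, forall k : nat, (K <= k)%nat ->
    forall j : Z, Rabs (Nat.iter k S f0 j - F (IZR j / 2 ^ k)) <= eps.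

Definition uniformly_convergent (S : zseq -> zseq) : Prop :=
  forall f0, bounded_seq f0 -> exists F, is_limit_function S f0 F.

Definition C1_function (F : R -> R) : Prop :=
  forall x, ex_derive F x /\ continuous (Derive F) x.

Definition C1_scheme (S : zseq -> zseq) : Prop :=
  uniformly_convergent S /\
  forall f0 F, bounded_seq f0 -> is_limit_function S f0 F -> C1_function F.

(* Main.v *)
Require Import Defs.
From Stdlib Require Import Reals Lra Lia ZArith List Bool.
From Coquelicot Require Import Coquelicot.
Open Scope R_scope.

Fixpoint ssum (N : nat) (F : nat -> R) : R :=
  match N with O => 0 | S N' => ssum N' F + F N' end.

Lemma ssum_S N F : ssum (S N) F = ssum N F + F N.
Proof. reflexivity. Qed.

Lemma ssum_ext N F G : (forall t, (t < N)%nat -> F t = G t) -> ssum N F = ssum N G.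
Proof. induction N; simpl; intros H; [reflexivity|]. rewrite IHN by (intros; apply H; lia). rewrite H by lia; reflexivity. Qed.

Lemma ssum_plus N F G : ssum N (fun t => F t + G t) = ssum N F + ssum N G.
Proof. induction N; simpl; [lra|]. rewrite IHN; lra. Qed.

Lemma ssum_minus N F G : ssum N (fun t => F t - G t) = ssum N F - ssum N G.
Proof. induction N; simpl; [lra|]. rewrite IHN; lra. Qed.

Lemma ssum_scal N c F : ssum N (fun t => c * F t) = c * ssum N F.
Proof. induction N; simpl; [lra|]. rewrite IHN; lra. Qed.

Lemma ssum_le N F G : (forall t, (t < N)%nat -> F t <= G t) -> ssum N F <= ssum N G.
Proof. induction N; simpl; intros H; [lra|]. pose proof (H N ltac:(lia)). pose proof (IHN ltac:(intros; apply H; lia)). lra. Qed.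

Lemma ssum_nonneg N F : (forall t, (t < N)%nat -> 0 <= F t) -> 0 <= ssum N F.
Proof. intros H. replace 0 with (ssum N (fun _ => 0)). apply ssum_le; auto.
  clear H; induction N; simpl; lra. Qed.

Lemma ssum_zero N : ssum N (fun _ => 0) = 0.
Proof. induction N; simpl; lra. Qed.

Lemma ssum_pos N F : (0 < N)%nat -> (forall t, (t < N)%nat -> 0 < F t) -> 0 < ssum N F.
Proof. destruct N; [lia|]. intros _ H. simpl. pose proof (ssum_nonneg N F ltac:(intros; left; apply H; lia)).
  pose proof (H N ltac:(lia)). lra. Qed.

Lemma ssum_abs N F : Rabs (ssum N F) <= ssum N (fun t => Rabs (F t)).
Proof. induction N; simpl. rewrite Rabs_R0; lra. eapply Rle_trans; [apply Rabs_triang|]. lra. Qed.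

Lemma ssum_const N c : ssum N (fun _ => c) = INR N * c.
Proof. induction N; simpl ssum; [simpl; lra|]. rewrite IHN, S_INR; lra. Qed.

Lemma ssum_shift1 N F : ssum (S N) F = F 0%nat + ssum N (fun t => F (S t)).
Proof. induction N; simpl; [lra|]. simpl in IHN. rewrite IHN. lra. Qed.

Lemma ssum_add N M F : ssum (N + M) F = ssum N F + ssum M (fun t => F (N + t)%nat).
Proof. induction M; simpl. rewrite Nat.add_0_r; lra. rewrite Nat.add_succ_r; simpl. rewrite IHM; lra. Qed.

Lemma ssum_rev N F : ssum N F = ssum N (fun t => F (N - 1 - t)%nat).
Proof. induction N; [reflexivity|]. rewrite (ssum_shift1 N (fun t => F (S N - 1 - t)%nat)).
  change (ssum (S N) F) with (ssum N F + F N). rewrite IHN.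
  replace (S N - 1 - 0)%nat with N by lia. rewrite Rplus_comm. f_equal.
  apply ssum_ext; intros t Ht. f_equal. lia. Qed.

Lemma ssum_pairs c F : ssum (2 * c) F = ssum c (fun t => F (2 * t)%nat + F (2 * t + 1)%nat).
Proof. induction c; [reflexivity|]. replace (2 * S c)%nat with (S (S (2 * c))) by lia.
  rewrite !ssum_S, IHc. replace (S (2*c)) with (2*c+1)%nat by lia. lra. Qed.

Lemma ssum_indic N t0 F : (t0 < N)%nat -> ssum N (fun t => if Nat.eqb t t0 then F t else 0) = F t0.
Proof. induction N; intros H; [lia|]. simpl. destruct (Nat.eq_dec t0 N).
  - subst. rewrite Nat.eqb_refl. rewrite (ssum_ext N _ (fun _ => 0)). rewrite ssum_zero; lra.
    intros t Ht. destruct (Nat.eqb_spec t N); [lia|reflexivity].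
  - rewrite IHN by lia. destruct (Nat.eqb_spec N t0); [lia|lra]. Qed.

Definition convex N (c : nat -> R) := (forall t, (t < N)%nat -> 0 <= c t) /\ ssum N c = 1.

Lemma conv_sub N c g Y : convex N c -> ssum N (fun t => c t * g t) - Y = ssum N (fun t => c t * (g t - Y)).
Proof. intros [_ H1]. rewrite (ssum_ext N (fun t => c t * (g t - Y)) (fun t => c t * g t - Y * c t)) by (intros; ring).
  rewrite ssum_minus, ssum_scal, H1. ring. Qed.

Lemma conv_abs N c g : convex N c -> Rabs (ssum N (fun t => c t * g t)) <= ssum N (fun t => c t * Rabs (g t)).
Proof. intros [H0 _]. eapply Rle_trans; [apply ssum_abs|]. apply ssum_le. intros t Ht.
  rewrite Rabs_mult, (Rabs_pos_eq (c t)) by (apply H0; auto). lra. Qed.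

Lemma conv_le N c e d : convex N c -> (forall t, (t < N)%nat -> e t <= d) -> ssum N (fun t => c t * e t) <= d.
Proof. intros [H0 H1] H. apply Rle_trans with (ssum N (fun t => d * c t)).
  apply ssum_le; intros t Ht. specialize (H0 t Ht); specialize (H t Ht). nra.
  rewrite ssum_scal, H1; lra. Qed.

Lemma conv_le2 N c e d t0 dl : convex N c -> (t0 < N)%nat -> (forall t, (t < N)%nat -> e t <= d) -> e t0 <= d - dl ->
  ssum N (fun t => c t * e t) <= d - c t0 * dl.
Proof. intros [H0 H1] Ht0 H H2.
  apply Rle_trans with (ssum N (fun t => d * c t - (if Nat.eqb t t0 then c t * dl else 0))).
  - apply ssum_le; intros t Ht. specialize (H0 t Ht); specialize (H t Ht).
    destruct (Nat.eqb_spec t t0). subst. nra. nra.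
  - rewrite ssum_minus, ssum_scal, H1, (ssum_indic N t0 (fun t => c t * dl)) by auto. lra. Qed.

Lemma conv_bound N c g M : convex N c -> (forall t, (t < N)%nat -> Rabs (g t) <= M) -> Rabs (ssum N (fun t => c t * g t)) <= M.
Proof. intros Hc H. eapply Rle_trans; [apply conv_abs; auto|]. apply conv_le; auto. Qed.

Lemma ssum_opp N F : - ssum N F = ssum N (fun t => - F t).
Proof. induction N; simpl; [lra|]. rewrite <- IHN; lra. Qed.

Definition Dz (g : zseq) : zseq := fun j => g (j+1)%Z - g j.
Definition dbound (g : zseq) (d : R) := forall j, Rabs (Dz g j) <= d.

Lemma dbound_nonneg g d : dbound g d -> 0 <= d.
Proof. intros H. specialize (H 0%Z). pose proof (Rabs_pos (Dz g 0%Z)). lra. Qed.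

Lemma dist_bound_nat g d : dbound g d -> forall (m : nat) a, Rabs (g (a + Z.of_nat m)%Z - g a) <= INR m * d.
Proof. intros H. induction m; intros a.
  - simpl. replace (a+0)%Z with a by lia. rewrite Rminus_diag, Rabs_R0. lra.
  - rewrite Nat2Z.inj_succ, S_INR. replace (a + Z.succ (Z.of_nat m))%Z with ((a + Z.of_nat m) + 1)%Z by lia.
    specialize (H (a + Z.of_nat m)%Z). unfold Dz in H. specialize (IHm a).
    replace (g (a + Z.of_nat m + 1)%Z - g a) with ((g (a + Z.of_nat m + 1)%Z - g (a + Z.of_nat m)%Z) + (g (a + Z.of_nat m)%Z - g a)) by ring.
    eapply Rle_trans; [apply Rabs_triang|]. lra. Qed.

Lemma dist_bound g d : dbound g d -> forall a b, Rabs (g a - g b) <= IZR (Z.abs (a - b)) * d.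
Proof. intros H a b. destruct (Z.le_gt_cases b a).
  - pose proof (dist_bound_nat g d H (Z.to_nat (a - b)) b).
    rewrite Z2Nat.id in H1 by lia. replace (b + (a - b))%Z with a in H1 by lia.
    rewrite INR_IZR_INZ, Z2Nat.id in H1 by lia. rewrite Z.abs_eq by lia. exact H1.
  - pose proof (dist_bound_nat g d H (Z.to_nat (b - a)) a).
    rewrite Z2Nat.id in H1 by lia. replace (a + (b - a))%Z with b in H1 by lia.
    rewrite INR_IZR_INZ, Z2Nat.id in H1 by lia. rewrite Z.abs_neq by lia. rewrite Rabs_minus_sym.
    replace (- (a - b))%Z with (b - a)%Z by lia. exact H1. Qed.

Definition fl (x : R) : Z := (up x - 1)%Z.
Lemma fl_spec x : IZR (fl x) <= x < IZR (fl x) + 1.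
Proof. unfold fl. destruct (archimed x) as [H1 H2]. rewrite minus_IZR. simpl. lra. Qed.
Lemma fl_unique x z : IZR z <= x < IZR z + 1 -> fl x = z.
Proof. intros [H1 H2]. unfold fl. rewrite <- (tech_up x (z+1)). lia. rewrite plus_IZR; simpl; lra.
  rewrite plus_IZR; simpl; lra. Qed.
Lemma fl_IZR j : fl (IZR j) = j.
Proof. apply fl_unique; lra. Qed.
Lemma fl_half y : (fl (2 * y) / 2)%Z = fl y.
Proof. symmetry. apply fl_unique. pose proof (fl_spec (2*y)). set (J := fl (2*y)) in *.
  assert (Hq: (2 * (J/2) <= J <= 2 * (J/2) + 1)%Z) by (Z.div_mod_to_equations; lia).
  destruct Hq as [Ha Hb]. apply IZR_le in Ha. apply IZR_le in Hb.
  rewrite mult_IZR in Ha. rewrite plus_IZR, mult_IZR in Hb. simpl in *. lra. Qed.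
Lemma fl_close x y : Rabs (x - y) < 1 -> (Z.abs (fl x - fl y) <= 1)%Z.
Proof. intros H. pose proof (fl_spec x); pose proof (fl_spec y).
  apply Rabs_def2 in H. destruct H.
  assert (IZR (fl x - fl y) < 2 /\ -2 < IZR (fl x - fl y)) as [A B] by (rewrite minus_IZR; lra).
  apply lt_IZR in A. apply lt_IZR in B. lia. Qed.

Lemma le_eps a b K : 0 <= K -> (forall eta, 0 < eta -> a <= b + eta * K) -> a <= b.
Proof. intros HK H. destruct (Rle_dec a b); auto. exfalso.
  specialize (H ((a - b) / (2 * (K + 1)))). assert (0 < (a-b)/(2*(K+1))) by (apply Rdiv_lt_0_compat; lra).
  specialize (H H0). assert ((a-b)/(2*(K+1)) * K < (a - b)).
  { apply Rle_lt_trans with ((a-b)/(2*(K+1)) * (K+1)). apply Rmult_le_compat_l; lra.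
    field_simplify; lra. }
  lra. Qed.

Lemma geo_small mu A eps : 0 <= mu < 1 -> 0 <= A -> 0 < eps -> exists N, forall n, (N <= n)%nat -> A * mu ^ n < eps.
Proof. intros Hmu HA He. destruct (pow_lt_1_zero mu ltac:(rewrite Rabs_pos_eq; lra) (eps / (A + 1)) ltac:(apply Rdiv_lt_0_compat; lra)) as [N HN].
  exists N. intros n Hn. specialize (HN n Hn). rewrite Rabs_pos_eq in HN by (apply pow_le; lra).
  assert (0 <= mu ^ n) by (apply pow_le; lra).
  apply Rle_lt_trans with ((A+1) * mu ^ n). nra.
  apply Rmult_lt_compat_l with (r := A+1) in HN; [|lra]. field_simplify in HN; lra. Qed.

Lemma pow2_small r : 0 < r -> exists k, / 2 ^ k < r.
Proof. intros Hr. destruct (geo_small (/2) 1 r ltac:(lra) ltac:(lra) Hr) as [N HN]. exists N.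
  specialize (HN N (le_n _)). rewrite Rmult_1_l, <- Rinv_pow in HN by lra. exact HN. Qed.

Lemma cont_eps f x : continuous f x -> forall eps, 0 < eps -> exists del, 0 < del /\ forall y, Rabs (y - x) < del -> Rabs (f y - f x) < eps.
Proof. intros H eps He. apply continuity_pt_filterlim in H.
  unfold continuity_pt, continue_in, limit1_in, limit_in in H. destruct (H eps He) as [a [Ha Hb]].
  exists a. split. lra. intros y Hy. destruct (Req_dec y x). subst. rewrite Rminus_diag, Rabs_R0; lra.
  apply (Hb y). split. split. exact I. auto. exact Hy. Qed.

Lemma eps_cont f x : (forall eps, 0 < eps -> exists del, 0 < del /\ forall y, Rabs (y - x) < del -> Rabs (f y - f x) < eps) -> continuous f x.
Proof. intros H. apply continuity_pt_filterlim.
  unfold continuity_pt, continue_in, limit1_in, limit_in. intros eps He. destruct (H eps He) as [a [Ha Hb]].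
  exists a. split. lra. intros y [_ Hy]. apply Hb. exact Hy. Qed.

Section PartA.
Variable T : zseq -> zseq.
Variables C D0 mu : R.
Hypothesis HC : 0 <= C.
Hypothesis HD0 : 0 <= D0.
Hypothesis Hmu : 0 < mu < 1.
Hypothesis HT1 : forall g d, dbound g d -> forall i, Rabs (T g i - g (i/2)%Z) <= C * d.
Hypothesis HT2 : forall g d, dbound g d -> forall k, dbound (Nat.iter k T g) (D0 * mu^k * d).

Variable g : zseq.
Variable d : R.
Hypothesis Hg : dbound g d.

Let gk k := Nat.iter k T g.
Let P k x := gk k (fl (x * 2^k)).
Let K0 := C * D0 * d.
Let e k := K0 * mu ^ k / (1 - mu).

Lemma Hd : 0 <= d. Proof. exact (dbound_nonneg g d Hg). Qed.
Lemma HK0 : 0 <= K0. Proof. unfold K0. pose proof Hd. apply Rmult_le_pos; auto. apply Rmult_le_pos; auto. Qed.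

Lemma stepP k x : Rabs (P (S k) x - P k x) <= K0 * mu ^ k.
Proof. assert (E: x * 2 ^ S k = 2 * (x * 2 ^ k)) by (simpl; ring). unfold P, gk. rewrite E.
  change (Nat.iter (S k) T g) with (T (Nat.iter k T g)).
  rewrite <- (fl_half (x * 2 ^ k)). eapply Rle_trans. apply HT1. apply HT2. exact Hg.
  unfold K0. lra. Qed.

Lemma cumP k m x : Rabs (P (k + m)%nat x - P k x) <= K0 * (mu ^ k - mu ^ (k + m)) / (1 - mu).
Proof. induction m.
  - rewrite Nat.add_0_r, Rminus_diag, Rabs_R0. unfold Rdiv. rewrite Rminus_diag. lra.
  - rewrite Nat.add_succ_r. pose proof (stepP (k + m) x).
    replace (P (S (k + m)) x - P k x) with ((P (S (k+m)) x - P (k+m)%nat x) + (P (k+m)%nat x - P k x)) by ring.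
    eapply Rle_trans; [apply Rabs_triang|].
    replace (K0 * (mu ^ k - mu ^ S (k + m)) / (1 - mu)) with (K0 * mu ^ (k+m) + K0 * (mu ^ k - mu ^ (k + m)) / (1 - mu)).
    lra. simpl. field. lra. Qed.

Lemma boundP k m x : (k <= m)%nat -> Rabs (P m x - P k x) <= e k.
Proof. intros H. replace m with (k + (m - k))%nat by lia. eapply Rle_trans; [apply cumP|].
  unfold e. unfold Rdiv. apply Rmult_le_compat_r. left; apply Rinv_0_lt_compat; lra.
  pose proof HK0. assert (0 <= mu ^ (k + (m-k))) by (apply pow_le; lra). nra. Qed.

Lemma e_small eps : 0 < eps -> exists N, forall n, (N <= n)%nat -> e n < eps.
Proof. intros He. destruct (geo_small mu (K0 / (1 - mu)) eps ltac:(lra)) as [N HN]; auto.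
  apply Rdiv_le_0_compat; [apply HK0|lra]. exists N. intros n Hn. specialize (HN n Hn). unfold e.
  replace (K0 * mu ^ n / (1 - mu)) with (K0 / (1 - mu) * mu ^ n) by (field; lra). exact HN. Qed.

Lemma cauchyP x : Cauchy_crit (fun m => P m x).
Proof. intros eps He. destruct (e_small (eps/2) ltac:(lra)) as [N HN]. exists N. intros n m Hn Hm.
  unfold Rdist. pose proof (boundP N n x Hn). pose proof (boundP N m x Hm). specialize (HN N (le_n _)).
  replace (P n x - P m x) with ((P n x - P N x) - (P m x - P N x)) by ring.
  eapply Rle_lt_trans. apply Rabs_triang. rewrite Rabs_Ropp. lra. Qed.

Definition Flim x : R := proj1_sig (Rcomplete.R_complete (fun m => P m x) (cauchyP x)).

Lemma Flim_bound k x : Rabs (Flim x - P k x) <= e k.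
Proof. unfold Flim. destruct (Rcomplete.R_complete (fun m => P m x) (cauchyP x)) as [l Hl]. simpl.
  apply (le_eps _ _ 1). lra. intros eta Heta. destruct (Hl eta Heta) as [N HN].
  specialize (HN (Nat.max N k) ltac:(lia)). unfold Rdist in HN. pose proof (boundP k (Nat.max N k) x ltac:(lia)).
  replace (l - P k x) with ((P (Nat.max N k) x - P k x) - (P (Nat.max N k) x - l)) by ring.
  eapply Rle_trans. apply Rabs_triang. rewrite Rabs_Ropp. lra. Qed.

Lemma Flim_cont x : continuous Flim x.
Proof. apply eps_cont. intros eps He.
  assert (0 <= D0 * d) by (pose proof Hd; apply Rmult_le_pos; auto).
  destruct (geo_small mu (2 * (K0 / (1 - mu)) + D0 * d) eps ltac:(lra)) as [k Hk]; auto.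
  { assert (0 <= K0 / (1 - mu)) by (apply Rdiv_le_0_compat; [apply HK0|lra]). lra. }
  specialize (Hk k (le_n _)). exists (/ 2 ^ k). split. apply Rinv_0_lt_compat, pow_lt; lra.
  intros y Hy. assert (H2k : 0 < 2 ^ k) by (apply pow_lt; lra).
  assert (Rabs (y * 2 ^ k - x * 2 ^ k) < 1).
  { replace (y * 2 ^ k - x * 2 ^ k) with ((y - x) * 2 ^ k) by ring. rewrite Rabs_mult, (Rabs_pos_eq (2^k)) by lra.
    apply Rmult_lt_compat_r with (r := 2 ^ k) in Hy; auto. rewrite Rinv_l in Hy; lra. }
  apply fl_close in H0.
  pose proof (dist_bound (gk k) _ (HT2 g d Hg k) (fl (y * 2 ^ k)) (fl (x * 2 ^ k))).
  assert (IZR (Z.abs (fl (y * 2 ^ k) - fl (x * 2 ^ k))) <= 1) by (apply IZR_le in H0; exact H0).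
  assert (0 <= D0 * mu ^ k * d) by (pose proof Hd; assert (0 <= mu ^ k) by (apply pow_le; lra); apply Rmult_le_pos; [apply Rmult_le_pos|]; auto).
  assert (Rabs (P k y - P k x) <= D0 * mu ^ k * d) by (unfold P; eapply Rle_trans; [exact H1|]; nra).
  pose proof (Flim_bound k y). pose proof (Flim_bound k x).
  replace (Flim y - Flim x) with ((Flim y - P k y) - (Flim x - P k x) + (P k y - P k x)) by ring.
  eapply Rle_lt_trans. apply Rabs_triang. eapply Rle_lt_trans. apply Rplus_le_compat_r. apply Rabs_triang.
  rewrite Rabs_Ropp. unfold e in *.
  replace (2 * (K0 / (1 - mu)) + D0 * d) with (2 * (K0 / (1 - mu)) + D0 * d) in Hk by reflexivity.
  assert (K0 * mu ^ k / (1 - mu) = K0 / (1-mu) * mu ^ k) by (field; lra). nra. Qed.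

Lemma partA_limit : is_limit_function T g Flim.
Proof. split. apply Flim_cont. intros eps He. destruct (e_small eps He) as [K HK]. exists K. intros k Hk j.
  pose proof (Flim_bound k (IZR j / 2 ^ k)). unfold P in H.
  replace (IZR j / 2 ^ k * 2 ^ k) with (IZR j) in H by (field; apply pow_nonzero; lra).
  rewrite fl_IZR in H. specialize (HK k Hk). unfold gk in H. rewrite Rabs_minus_sym. lra. Qed.

End PartA.

Theorem partA (T : zseq -> zseq) C D0 mu :
  0 <= C -> 0 <= D0 -> 0 < mu < 1 ->
  (forall g d, dbound g d -> forall i, Rabs (T g i - g (i/2)%Z) <= C * d) ->
  (forall g d, dbound g d -> forall k, dbound (Nat.iter k T g) (D0 * mu^k * d)) ->
  forall g d, dbound g d -> exists F, is_limit_function T g F.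
Proof. intros. refine (ex_intro _ _ (partA_limit T C D0 mu _ _ _ _ _ g d _)); assumption. Qed.

Lemma telescope u A N : u (A + Z.of_nat N)%Z - u A = ssum N (fun i => Dz u (A + Z.of_nat i)%Z).
Proof. induction N. simpl. replace (A + 0)%Z with A by lia. lra.
  rewrite ssum_S, <- IHN. unfold Dz. rewrite Nat2Z.inj_succ. replace (A + Z.succ (Z.of_nat N))%Z with (A + Z.of_nat N + 1)%Z by lia. ring. Qed.

Lemma IZR_pow2 r : IZR (Z.of_nat (2 ^ r)%nat) = 2 ^ r.
Proof. rewrite <- INR_IZR_INZ, pow_INR. simpl. f_equal. Qed.

Section PartB.
Variables S T : zseq -> zseq.
Variables C' C D0 mu : R.
Hypothesis HC' : 0 <= C'.
Hypothesis HC : 0 <= C.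
Hypothesis HD0 : 0 <= D0.
Hypothesis Hmu : 0 < mu < 1.
Hypothesis HS1 : forall f d, dbound f d -> forall i, Rabs (S f i - f (i/2)%Z) <= C' * d.
Hypothesis HSD : forall f k, Dz (S f) k = / 2 * T (Dz f) k.
Hypothesis HText : forall h h' k, (forall l, h l = h' l) -> T h k = T h' k.
Hypothesis HTscal : forall h c k, T (fun l => c * h l) k = c * T h k.
Hypothesis HT0 : forall h M, (forall l, Rabs (h l) <= M) -> forall k, Rabs (T h k) <= M.
Hypothesis HT1 : forall g d, dbound g d -> forall i, Rabs (T g i - g (i/2)%Z) <= C * d.
Hypothesis HT2 : forall g d, dbound g d -> forall k, dbound (Nat.iter k T g) (D0 * mu^k * d).

Lemma iterD m f k : Dz (Nat.iter m S f) k = (/2)^m * Nat.iter m T (Dz f) k.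
Proof. revert k. induction m; intros k. simpl. lra.
  change (Nat.iter (Datatypes.S m) S f) with (S (Nat.iter m S f)).
  rewrite HSD. rewrite (HText _ (fun l => (/2)^m * Nat.iter m T (Dz f) l)) by (intros; apply IHm).
  rewrite HTscal. simpl. ring. Qed.

Lemma iterT0 m h M : (forall l, Rabs (h l) <= M) -> forall k, Rabs (Nat.iter m T h k) <= M.
Proof. intros H. induction m; intros k. apply H. simpl. apply HT0. exact IHm. Qed.

Lemma S_dec f d : dbound f d -> forall k, dbound (Nat.iter k S f) (1 * (/2)^k * d).
Proof. intros H k j. rewrite iterD, Rabs_mult, Rabs_pos_eq by (apply pow_le; lra).
  pose proof (iterT0 k (Dz f) d H j). assert (0 <= (/2)^k) by (apply pow_le; lra). nra. Qed.

Lemma bounded_dbound f : bounded_seq f -> exists d, dbound f d.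
Proof. intros [B HB]. exists (2 * B). intros j. unfold Dz. pose proof (HB (j+1)%Z). pose proof (HB j).
  eapply Rle_trans. apply Rabs_triang. rewrite Rabs_Ropp. lra. Qed.

Lemma unifS : uniformly_convergent S.
Proof. intros f Hf. destruct (bounded_dbound f Hf) as [d Hd].
  apply (partA S C' 1 (/2)) with (d := d); auto; try lra. exact S_dec. Qed.

Section Deriv.
Variable f0 : zseq.
Variables F G : R -> R.
Hypothesis HF : is_limit_function S f0 F.
Hypothesis HG : is_limit_function T (Dz f0) G.

Lemma dyadic x0 eps del : 0 < del -> 0 <= eps -> (forall t, Rabs (t - x0) < del -> Rabs (G t - G x0) <= eps) ->
  forall k a b, (a <= b)%Z -> x0 - del < IZR a / 2^k -> IZR b / 2^k < x0 + del ->
  Rabs (F (IZR b / 2^k) - F (IZR a / 2^k) - (IZR b / 2^k - IZR a / 2^k) * G x0) <= eps * (IZR b / 2^k - IZR a / 2^k).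
Proof. intros Hdel Heps HGc k a b Hab Ha Hb.
  assert (H2k : 0 < 2 ^ k) by (apply pow_lt; lra).
  set (wdt := IZR b / 2^k - IZR a / 2^k).
  assert (Hw : 0 <= wdt). { unfold wdt. apply IZR_le in Hab. unfold Rdiv. rewrite <- Rmult_minus_distr_r.
    apply Rmult_le_pos. lra. left; apply Rinv_0_lt_compat; lra. }
  apply (le_eps _ _ (2 + wdt)). lra. intros eta Heta.
  destruct HF as [_ HF2]. destruct HG as [_ HG2].
  destruct (HF2 eta Heta) as [K1 HK1]. destruct (HG2 eta Heta) as [K2 HK2].
  set (r := (K1 + K2)%nat). set (m := (k + r)%nat). set (s := Z.of_nat (2 ^ r)%nat).
  assert (Hs : IZR s = 2 ^ r) by apply IZR_pow2.
  assert (H2m : 2 ^ m = 2 ^ k * 2 ^ r) by (unfold m; apply pow_add).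
  assert (H2r : 0 < 2 ^ r) by (apply pow_lt; lra).
  set (A := (a * s)%Z). set (B := (b * s)%Z).
  assert (HA : IZR A / 2 ^ m = IZR a / 2 ^ k) by (unfold A; rewrite mult_IZR, Hs, H2m; field; lra).
  assert (HB : IZR B / 2 ^ m = IZR b / 2 ^ k) by (unfold B; rewrite mult_IZR, Hs, H2m; field; lra).
  assert (Hsp : (0 < s)%Z) by (apply lt_IZR; rewrite Hs; exact H2r).
  set (N := Z.to_nat (B - A)).
  assert (HBN : B = (A + Z.of_nat N)%Z) by (unfold N; rewrite Z2Nat.id; [lia|unfold A, B; nia]).
  assert (HN : (/2)^m * INR N = wdt).
  { rewrite INR_IZR_INZ. unfold N. rewrite Z2Nat.id by (unfold A, B; nia). rewrite minus_IZR.
    unfold wdt. rewrite <- HA, <- HB. rewrite <- Rinv_pow by lra. field. apply pow_nonzero; lra. }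
  assert (HmK1 : (K1 <= m)%nat) by (unfold m, r; lia). assert (HmK2 : (K2 <= m)%nat) by (unfold m, r; lia).
  pose proof (HK1 m HmK1 B) as EB. pose proof (HK1 m HmK1 A) as EA. rewrite HB in EB. rewrite HA in EA.
  pose proof (telescope (Nat.iter m S f0) A N) as Htel. rewrite <- HBN in Htel.
  rewrite (ssum_ext N _ (fun i => (/2)^m * Nat.iter m T (Dz f0) (A + Z.of_nat i)%Z)) in Htel by (intros; apply iterD).
  rewrite ssum_scal in Htel.
  assert (Hsum : Rabs (ssum N (fun i => Nat.iter m T (Dz f0) (A + Z.of_nat i)%Z) - INR N * G x0) <= INR N * (eta + eps)).
  { rewrite <- ssum_const, <- ssum_minus, <- ssum_const. eapply Rle_trans. apply ssum_abs. apply ssum_le.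
    intros i Hi. specialize (HK2 m HmK2 (A + Z.of_nat i)%Z).
    assert (Hloc : Rabs (IZR (A + Z.of_nat i) / 2 ^ m - x0) < del).
    { assert (IZR A <= IZR (A + Z.of_nat i) <= IZR B).
      { split; apply IZR_le; lia. }
      assert (IZR (A + Z.of_nat i) < IZR B) by (apply IZR_lt; lia).
      assert (IZR A / 2^m <= IZR (A + Z.of_nat i) / 2^m < IZR B / 2^m).
      { assert (0 < 2^m) by (apply pow_lt; lra). assert (0 < / 2^m) by (apply Rinv_0_lt_compat; lra).
        split; unfold Rdiv; [apply Rmult_le_compat_r|apply Rmult_lt_compat_r]; lra. }
      rewrite HA, HB in H1. apply Rabs_def1; lra. }
    specialize (HGc _ Hloc).
    replace (Nat.iter m T (Dz f0) (A + Z.of_nat i)%Z - G x0) with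
      ((Nat.iter m T (Dz f0) (A + Z.of_nat i)%Z - G (IZR (A + Z.of_nat i) / 2 ^ m)) + (G (IZR (A + Z.of_nat i) / 2 ^ m) - G x0)) by ring.
    eapply Rle_trans. apply Rabs_triang. lra. }
  assert (Hpm : 0 < (/2)^m) by (apply pow_lt; lra).
  replace (F (IZR b / 2 ^ k) - F (IZR a / 2 ^ k) - wdt * G x0) with
    (-(Nat.iter m S f0 B - F (IZR b / 2 ^ k)) + (Nat.iter m S f0 A - F (IZR a / 2 ^ k)) +
      (/2)^m * (ssum N (fun i => Nat.iter m T (Dz f0) (A + Z.of_nat i)%Z) - INR N * G x0)).
  2:{ rewrite <- HN. rewrite Rmult_minus_distr_l, <- Htel. ring. }
  eapply Rle_trans. apply Rabs_triang. eapply Rle_trans. apply Rplus_le_compat_r. apply Rabs_triang.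
  rewrite Rabs_Ropp, Rabs_mult, (Rabs_pos_eq ((/2)^m)) by lra.
  assert ((/2)^m * Rabs (ssum N (fun i => Nat.iter m T (Dz f0) (A + Z.of_nat i)%Z) - INR N * G x0) <= wdt * (eta + eps)).
  { rewrite <- HN. rewrite Rmult_assoc. apply Rmult_le_compat_l; lra. }
  lra. Qed.

Lemma gen_ineq x0 eps del : 0 < del -> 0 <= eps -> (forall t, Rabs (t - x0) < del -> Rabs (G t - G x0) <= eps) ->
  forall y z, x0 - del < y -> y <= z -> z < x0 + del ->
  Rabs (F z - F y - (z - y) * G x0) <= eps * (z - y).
Proof. intros Hdel Heps HGc y z Hy Hyz Hz. destruct (Req_dec y z) as [<-|Hne].
  { rewrite !Rminus_diag, Rmult_0_l, Rminus_0_r, Rabs_R0. lra. }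
  assert (Hlt : y < z) by lra.
  apply (le_eps _ _ (4 + 2 * Rabs (G x0))). pose proof (Rabs_pos (G x0)); lra. intros eta Heta.
  destruct HF as [HFc _].
  destruct (cont_eps F y (HFc y) eta Heta) as [dy [Hdy Hcy]].
  destruct (cont_eps F z (HFc z) eta Heta) as [dz [Hdz Hcz]].
  destruct (pow2_small (Rmin (Rmin dy dz) (Rmin ((z - y)/2) eta))) as [k Hk].
  { repeat apply Rmin_pos; lra. }
  assert (H2k : 0 < 2 ^ k) by (apply pow_lt; lra).
  assert (Hi : 0 < / 2 ^ k) by (apply Rinv_0_lt_compat; lra).
  pose proof (Rmin_l (Rmin dy dz) (Rmin ((z - y)/2) eta)). pose proof (Rmin_r (Rmin dy dz) (Rmin ((z - y)/2) eta)).
  pose proof (Rmin_l dy dz). pose proof (Rmin_r dy dz). pose proof (Rmin_l ((z - y)/2) eta). pose proof (Rmin_r ((z - y)/2) eta).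
  set (a := (fl (y * 2^k) + 1)%Z). set (b := fl (z * 2^k)).
  pose proof (fl_spec (y * 2^k)) as Fy. pose proof (fl_spec (z * 2^k)) as Fz.
  assert (Ea : IZR a / 2^k = (IZR (fl (y * 2^k)) + 1) / 2^k) by (unfold a; rewrite plus_IZR; reflexivity).
  assert (Kw : forall u, u / 2^k * 2^k = u) by (intros; field; lra).
  assert (Ha1 : y < IZR a / 2^k).
  { apply Rmult_lt_reg_r with (2^k); auto. rewrite Kw. unfold a. rewrite plus_IZR. lra. }
  assert (Ha2 : IZR a / 2^k <= y + / 2^k).
  { apply Rmult_le_reg_r with (2^k); auto. rewrite Kw. rewrite Rmult_plus_distr_r, Rinv_l by lra. unfold a. rewrite plus_IZR. lra. }
  assert (Hb1 : IZR b / 2^k <= z).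
  { apply Rmult_le_reg_r with (2^k); auto. rewrite Kw. unfold b. lra. }
  assert (Hb2 : z - / 2^k < IZR b / 2^k).
  { apply Rmult_lt_reg_r with (2^k); auto. rewrite Kw. rewrite Rmult_minus_distr_r, Rinv_l by lra. unfold b. lra. }
  assert (Hab : (a <= b)%Z).
  { apply le_IZR. assert (IZR a / 2^k <= IZR b / 2^k) by lra.
    apply Rmult_le_compat_r with (r := 2^k) in H5; [|lra]. rewrite !Kw in H5. lra. }
  pose proof (dyadic x0 eps del Hdel Heps HGc k a b Hab ltac:(lra) ltac:(lra)) as Hd.
  set (a' := IZR a / 2^k) in *. set (b' := IZR b / 2^k) in *.
  assert (Hfa : Rabs (F a' - F y) < eta) by (apply Hcy; apply Rabs_def1; lra).
  assert (Hfb : Rabs (F b' - F z) < eta) by (apply Hcz; apply Rabs_def1; lra).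
  assert (Hw : Rabs ((z - y) - (b' - a')) <= 2 * eta) by (apply Rabs_le; lra).
  replace (F z - F y - (z - y) * G x0) with ((F b' - F a' - (b' - a') * G x0) - (F b' - F z) + (F a' - F y) - ((z - y) - (b' - a')) * G x0) by ring.
  eapply Rle_trans. apply Rabs_triang. eapply Rle_trans. apply Rplus_le_compat_l. rewrite Rabs_Ropp, Rabs_mult. apply Rmult_le_compat_r. apply Rabs_pos. exact Hw.
  eapply Rle_trans. apply Rplus_le_compat_r. apply Rabs_triang. eapply Rle_trans. apply Rplus_le_compat_r. apply Rplus_le_compat_r. apply Rabs_triang.
  rewrite Rabs_Ropp. assert (eps * (b' - a') <= eps * (z - y)) by (apply Rmult_le_compat_l; lra). lra. Qed.

Lemma quot_bound X w e : 0 < w -> 0 < e -> Rabs X <= e/2 * w -> Rabs (X / w) < e.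
Proof. intros Hw He H. rewrite Rabs_div by lra. rewrite (Rabs_pos_eq w) by lra.
  unfold Rdiv. apply Rle_lt_trans with (e/2 * w * / w).
  apply Rmult_le_compat_r; [left; apply Rinv_0_lt_compat; lra|exact H].
  replace (e / 2 * w * / w) with (e/2) by (field; lra). lra. Qed.

Lemma deriv_FG x0 : is_derive F x0 (G x0).
Proof. apply is_derive_Reals. intros eps He. destruct HG as [HGc _].
  destruct (cont_eps G x0 (HGc x0) (eps/2) ltac:(lra)) as [del [Hdel Hc]].
  exists (mkposreal del Hdel). simpl. intros h Hh0 Hh.
  assert (HGc' : forall t, Rabs (t - x0) < del -> Rabs (G t - G x0) <= eps/2) by (intros; left; apply Hc; auto).
  apply Rabs_def2 in Hh. destruct Hh as [Hh1 Hh2].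
  destruct (Rlt_or_le 0 h) as [Hp|Hn].
  - pose proof (gen_ineq x0 (eps/2) del Hdel ltac:(lra) HGc' x0 (x0 + h) ltac:(lra) ltac:(lra) ltac:(lra)).
    replace ((F (x0 + h) - F x0) / h - G x0) with ((F (x0 + h) - F x0 - (x0 + h - x0) * G x0) / h) by (field; lra).
    apply quot_bound; auto. replace (x0 + h - x0) with h in * by ring. lra.
  - assert (h < 0) by lra.
    pose proof (gen_ineq x0 (eps/2) del Hdel ltac:(lra) HGc' (x0 + h) x0 ltac:(lra) ltac:(lra) ltac:(lra)).
    replace ((F (x0 + h) - F x0) / h - G x0) with ((F x0 - F (x0 + h) - (x0 - (x0 + h)) * G x0) / (- h)) by (field; lra).
    apply quot_bound; [lra|auto|]. replace (x0 - (x0 + h)) with (-h) in * by ring. lra. Qed.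

Lemma C1_FG : C1_function F.
Proof. intros x. split. exists (G x). apply deriv_FG.
  destruct HG as [HGc _]. apply (continuous_ext G). intros t. symmetry. apply is_derive_unique. apply deriv_FG.
  apply HGc. Qed.
End Deriv.

Theorem partB : C1_scheme S.
Proof. split. apply unifS. intros f0 F Hf0 HF.
  destruct (bounded_dbound f0 Hf0) as [d Hd].
  assert (Hdd : dbound (Dz f0) (2 * d)).
  { intros j. unfold Dz at 1. pose proof (Hd (j+1)%Z). pose proof (Hd j).
    eapply Rle_trans. apply Rabs_triang. rewrite Rabs_Ropp. lra. }
  destruct (partA T C D0 mu HC HD0 Hmu HT1 HT2 (Dz f0) (2 * d) Hdd) as [G HG].
  apply (C1_FG f0 F G HF HG). Qed.
End PartB.

Lemma conv_pair N M c c' g g' d : convex N c -> convex M c' ->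
  (forall t s, (t < N)%nat -> (s < M)%nat -> Rabs (g t - g' s) <= d) ->
  Rabs (ssum N (fun t => c t * g t) - ssum M (fun s => c' s * g' s)) <= d.
Proof. intros Hc Hc' H. rewrite (conv_sub N c g) by auto. apply conv_bound; auto. intros t Ht.
  rewrite Rabs_minus_sym. rewrite (conv_sub M c' g') by auto. apply conv_bound; auto. intros s Hs.
  rewrite Rabs_minus_sym. apply H; auto. Qed.

Lemma conv_pair2 N1 N2 M1 M2 c c2 e e2 g g' d t0 u0 s0 v0 :
  convex N1 c -> (forall t, (t < N1)%nat -> convex N2 (c2 t)) ->
  convex M1 e -> (forall s, (s < M1)%nat -> convex M2 (e2 s)) ->
  (forall t u s v, (t < N1)%nat -> (u < N2)%nat -> (s < M1)%nat -> (v < M2)%nat -> Rabs (g t u - g' s v) <= d) ->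
  (t0 < N1)%nat -> (u0 < N2)%nat -> (s0 < M1)%nat -> (v0 < M2)%nat -> g t0 u0 = g' s0 v0 ->
  Rabs (ssum N1 (fun t => c t * ssum N2 (fun u => c2 t u * g t u)) - ssum M1 (fun s => e s * ssum M2 (fun v => e2 s v * g' s v)))
   <= d - c t0 * (c2 t0 u0 * (e s0 * (e2 s0 v0 * d))).
Proof. intros Hc Hc2 He He2 H Ht0 Hu0 Hs0 Hv0 Heq.
  set (Y := ssum M1 (fun s => e s * ssum M2 (fun v => e2 s v * g' s v))).
  assert (Hd : 0 <= d) by (specialize (H t0 u0 s0 v0 Ht0 Hu0 Hs0 Hv0); pose proof (Rabs_pos (g t0 u0 - g' s0 v0)); lra).
  assert (Step1 : forall t u, (t < N1)%nat -> (u < N2)%nat -> Rabs (g t u - Y) <= d - (if andb (Nat.eqb t t0) (Nat.eqb u u0) then e s0 * (e2 s0 v0 * d) else 0)).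
  { intros t u Ht Hu. rewrite Rabs_minus_sym. unfold Y. rewrite (conv_sub M1 e) by auto.
    eapply Rle_trans. apply conv_abs; auto.
    destruct (andb (Nat.eqb t t0) (Nat.eqb u u0)) eqn:Etu.
    - apply andb_prop in Etu. destruct Etu as [E1 E2]. apply Nat.eqb_eq in E1. apply Nat.eqb_eq in E2. subst.
      apply conv_le2; auto.
      + intros s Hs. rewrite (conv_sub M2 (e2 s)) by auto. eapply Rle_trans. apply conv_abs; auto.
        apply conv_le; auto. intros v Hv. rewrite Rabs_minus_sym. apply H; auto.
      + rewrite (conv_sub M2 (e2 s0)) by auto. eapply Rle_trans. apply conv_abs; auto.
        replace (d - e2 s0 v0 * d) with (d - e2 s0 v0 * d) by reflexivity.
        apply conv_le2; auto. intros v Hv. rewrite Rabs_minus_sym. apply H; auto.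
        rewrite Heq, Rminus_diag, Rabs_R0. lra.
    - rewrite Rminus_0_r. apply conv_le; auto. intros s Hs. rewrite (conv_sub M2 (e2 s)) by auto.
      eapply Rle_trans. apply conv_abs; auto. apply conv_le; auto. intros v Hv. rewrite Rabs_minus_sym. apply H; auto. }
  rewrite (conv_sub N1 c) by auto. eapply Rle_trans. apply conv_abs; auto.
  apply conv_le2; auto.
  - intros t Ht. rewrite (conv_sub N2 (c2 t)) by auto. eapply Rle_trans. apply conv_abs; auto.
    apply conv_le; auto. intros u Hu. eapply Rle_trans. apply Step1; auto.
    destruct (andb _ _); [|lra]. destruct He as [He0 _]. destruct (He2 s0 Hs0) as [He20 _].
    specialize (He0 s0 Hs0). specialize (He20 v0 Hv0). assert (0 <= e2 s0 v0 * d) by (apply Rmult_le_pos; auto).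
    assert (0 <= e s0 * (e2 s0 v0 * d)) by (apply Rmult_le_pos; auto). lra.
  - rewrite (conv_sub N2 (c2 t0)) by auto. eapply Rle_trans. apply conv_abs; auto.
    apply conv_le2; auto.
    + intros u Hu. eapply Rle_trans. apply Step1; auto.
      destruct (andb _ _); [|lra]. destruct He as [He0 _]. destruct (He2 s0 Hs0) as [He20 _].
      specialize (He0 s0 Hs0). specialize (He20 v0 Hv0). assert (0 <= e2 s0 v0 * d) by (apply Rmult_le_pos; auto).
      assert (0 <= e s0 * (e2 s0 v0 * d)) by (apply Rmult_le_pos; auto). lra.
    + eapply Rle_trans. apply Step1; auto. rewrite !Nat.eqb_refl. simpl. lra. Qed.

Definition Osc (N : Z) (h : zseq) (d : R) := forall l l', (Z.abs (l - l') <= N)%Z -> Rabs (h l - h l') <= d.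

Lemma osc_of_dbound N h d : (0 <= N)%Z -> dbound h d -> Osc N h (IZR N * d).
Proof. intros HN H l l' Hl. eapply Rle_trans. apply dist_bound; eauto. apply Rmult_le_compat_r.
  apply (dbound_nonneg h d H). apply IZR_le; auto. Qed.

Lemma dbound_of_osc N h d : (1 <= N)%Z -> Osc N h d -> dbound h d.
Proof. intros HN H j. unfold Dz. apply H. lia. Qed.

Lemma dbound_mono h d d' : dbound h d -> d <= d' -> dbound h d'.
Proof. intros H Hd j. specialize (H j). lra. Qed.

Lemma mod2_cases k : (k mod 2 = 0 \/ k mod 2 = 1)%Z.
Proof. Z.div_mod_to_equations; lia. Qed.

Section Window.
Variable n : nat.
Hypothesis Hn : (2 <= n)%nat.
Variable tau : Z -> nat -> R.
Variable theta : R.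
Hypothesis Hth : 0 < theta <= 1/2.
Hypothesis Hconv : forall i, (i = 0 \/ i = 1)%Z -> convex (2*n-1) (tau i).
Hypothesis Hpos : forall i t, (i = 0 \/ i = 1)%Z -> (t < 2*n-1)%nat -> theta <= tau i t.

Definition Tw (h : zseq) : zseq := fun k => ssum (2*n-1) (fun t => tau (k mod 2)%Z t * h (k/2 - Z.of_nat n + 1 + Z.of_nat t)%Z).


Lemma Hconvk k : convex (2*n-1) (tau (k mod 2)%Z).
Proof. apply Hconv, mod2_cases. Qed.

Lemma Tw_ext h h' k : (forall l, h l = h' l) -> Tw h k = Tw h' k.
Proof. intros H. unfold Tw. apply ssum_ext. intros. rewrite H. reflexivity. Qed.

Lemma Tw_scal h c k : Tw (fun l => c * h l) k = c * Tw h k.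
Proof. unfold Tw. rewrite <- ssum_scal. apply ssum_ext. intros; ring. Qed.

Lemma Tw_T0 h M : (forall l, Rabs (h l) <= M) -> forall k, Rabs (Tw h k) <= M.
Proof. intros H k. unfold Tw. apply conv_bound. apply Hconvk. intros; apply H. Qed.

Lemma Tw_T1 g d : dbound g d -> forall i, Rabs (Tw g i - g (i/2)%Z) <= INR n * d.
Proof. intros H i. unfold Tw. rewrite conv_sub by apply Hconvk. apply conv_bound. apply Hconvk.
  intros t Ht. eapply Rle_trans. apply dist_bound; eauto. apply Rmult_le_compat_r. apply (dbound_nonneg g d H).
  rewrite INR_IZR_INZ. apply IZR_le. lia. Qed.

Lemma osc_T1 h d : Osc (4 * Z.of_nat n) h d -> Osc (4 * Z.of_nat n) (Tw h) d.
Proof. intros H k k' Hk. unfold Tw. apply conv_pair; try apply Hconvk.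
  intros t s Ht Hs. apply H. Z.div_mod_to_equations. lia. Qed.

Lemma osc_T2_le h d k k' : Osc (4 * Z.of_nat n) h d -> (k <= k' <= k + 4 * Z.of_nat n)%Z ->
  Rabs (Tw (Tw h) k - Tw (Tw h) k') <= (1 - theta^4) * d.
Proof. intros H Hk. unfold Tw.
  set (m := fun (k : Z) (t : nat) => (k / 2 - Z.of_nat n + 1 + Z.of_nat t)%Z).
  set (v0 := Z.to_nat ((m k (2*n-2)%nat) / 2 - (m k' 0%nat) / 2 + Z.of_nat n - 1)).
  assert (Hz : (0 <= (m k (2*n-2)%nat) / 2 - (m k' 0%nat) / 2 + Z.of_nat n - 1 <= 2 * Z.of_nat n - 2)%Z).
  { unfold m. rewrite Nat2Z.inj_sub by lia. rewrite Nat2Z.inj_mul. simpl Z.of_nat. Z.div_mod_to_equations. lia. }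
  assert (Hv0 : (Z.of_nat v0 = (m k (2*n-2)%nat) / 2 - (m k' 0%nat) / 2 + Z.of_nat n - 1)%Z) by (unfold v0; rewrite Z2Nat.id; lia).
  assert (Hv0' : (v0 < 2*n-1)%nat) by lia.
  assert (Hd : 0 <= d) by (specialize (H 0%Z 0%Z ltac:(lia)); rewrite Rminus_diag, Rabs_R0 in H; exact H).
  eapply Rle_trans.
  apply (conv_pair2 (2*n-1) (2*n-1) (2*n-1) (2*n-1) _ (fun t u => tau (m k t mod 2)%Z u) _ (fun s v => tau (m k' s mod 2)%Z v)
     (fun t u => h ((m k t) / 2 - Z.of_nat n + 1 + Z.of_nat u)%Z) (fun s v => h ((m k' s) / 2 - Z.of_nat n + 1 + Z.of_nat v)%Z)
     d (2*n-2)%nat (n-1)%nat 0%nat v0).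
  - apply Hconvk.
  - intros; apply Hconvk.
  - apply Hconvk.
  - intros; apply Hconvk.
  - intros t u s v Ht Hu Hs Hv. apply H. unfold m. Z.div_mod_to_equations. lia.
  - lia. - lia. - lia. - lia.
  - f_equal. rewrite Hv0. rewrite Nat2Z.inj_sub by lia. simpl Z.of_nat. ring.
  - assert (theta <= tau (k mod 2)%Z (2 * n - 2)%nat) by (apply Hpos; [apply mod2_cases|lia]).
    assert (theta <= tau (m k (2*n-2)%nat mod 2)%Z (n - 1)%nat) by (apply Hpos; [apply mod2_cases|lia]).
    assert (theta <= tau (k' mod 2)%Z 0%nat) by (apply Hpos; [apply mod2_cases|lia]).
    assert (theta <= tau (m k' 0%nat mod 2)%Z v0) by (apply Hpos; [apply mod2_cases|lia]).
    set (a1 := tau (k mod 2)%Z (2 * n - 2)%nat) in *. set (a2 := tau (m k (2*n-2)%nat mod 2)%Z (n - 1)%nat) in *.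
    set (a3 := tau (k' mod 2)%Z 0%nat) in *. set (a4 := tau (m k' 0%nat mod 2)%Z v0) in *.
    assert (theta^4 <= a1 * (a2 * (a3 * a4))).
    { replace (theta^4) with (theta * (theta * (theta * theta))) by ring.
      apply Rmult_le_compat; try lra. repeat apply Rmult_le_pos; lra.
      apply Rmult_le_compat; try lra. repeat apply Rmult_le_pos; lra.
      apply Rmult_le_compat; lra. }
    replace (a1 * (a2 * (a3 * (a4 * d)))) with ((a1 * (a2 * (a3 * a4))) * d) by ring. nra. Qed.

Lemma osc_T2 h d : Osc (4 * Z.of_nat n) h d -> Osc (4 * Z.of_nat n) (Tw (Tw h)) ((1 - theta^4) * d).
Proof. intros H k k' Hk. destruct (Z.le_gt_cases k k').
  - apply osc_T2_le; auto. lia.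
  - rewrite Rabs_minus_sym. apply osc_T2_le; auto. lia. Qed.

Let rho := 1 - theta^4.
Lemma Hrho : 0 < rho < 1.
Proof. unfold rho. assert (0 < theta^4) by (apply pow_lt; lra).
  assert (theta^4 <= 1). { replace (theta^4) with ((theta*theta)*(theta*theta)) by ring.
    assert (theta * theta <= 1) by nra. assert (0 <= theta*theta) by nra. nra. } split; try lra.
  assert (theta^4 < 1). { replace (theta^4) with ((theta*theta)*(theta*theta)) by ring.
    assert (theta * theta <= 1/4) by nra. assert (0 <= theta*theta) by nra. nra. } lra. Qed.

Lemma osc_iter h d : Osc (4 * Z.of_nat n) h d -> 0 <= d -> forall j,
  Osc (4 * Z.of_nat n) (Nat.iter (2*j) Tw h) (rho^j * d) /\ Osc (4 * Z.of_nat n) (Nat.iter (2*j+1) Tw h) (rho^j * d).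
Proof. intros H Hd j. induction j.
  - simpl. rewrite Rmult_1_l. split; auto. apply osc_T1; auto.
  - destruct IHj as [I1 I2].
    assert (E : Nat.iter (2 * S j) Tw h = Tw (Tw (Nat.iter (2*j) Tw h))) by (replace (2 * S j)%nat with (S (S (2*j))) by lia; reflexivity).
    assert (E' : Nat.iter (2 * S j + 1) Tw h = Tw (Nat.iter (2 * S j) Tw h)) by (replace (2 * S j + 1)%nat with (S (2 * S j)) by lia; reflexivity).
    assert (Hs : Osc (4 * Z.of_nat n) (Nat.iter (2 * S j) Tw h) (rho ^ S j * d)).
    { rewrite E. simpl pow. replace (rho * rho ^ j * d) with ((1 - theta^4) * (rho^j * d)) by (unfold rho; ring).
      apply osc_T2; auto. }
    split; auto. rewrite E'. apply osc_T1; auto. Qed.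

Definition mu_w := sqrt rho.
Lemma Hmu_w : 0 < mu_w < 1.
Proof. unfold mu_w. pose proof Hrho. split. apply sqrt_lt_R0; lra.
  rewrite <- sqrt_1. apply sqrt_lt_1; lra. Qed.

Lemma Tw_T2 g d : dbound g d -> forall k, dbound (Nat.iter k Tw g) ((IZR (4 * Z.of_nat n) / mu_w) * mu_w ^ k * d).
Proof. intros H k. pose proof (dbound_nonneg g d H) as Hd.
  assert (HN : (0 <= 4 * Z.of_nat n)%Z) by lia.
  pose proof (osc_of_dbound _ g d HN H) as Ho.
  assert (Hd' : 0 <= IZR (4 * Z.of_nat n) * d) by (apply Rmult_le_pos; auto; apply IZR_le; lia).
  pose proof (osc_iter g _ Ho Hd' (Nat.div2 k)) as [O1 O2].
  pose proof Hmu_w as Hm. pose proof Hrho.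
  assert (Hr : rho = mu_w ^ 2) by (unfold mu_w; simpl; rewrite Rmult_1_r, sqrt_sqrt; lra).
  assert (Hbound : rho ^ (Nat.div2 k) <= mu_w ^ k / mu_w).
  { rewrite Hr, <- pow_mult. destruct (Nat.Even_or_Odd k) as [[j Hj]|[j Hj]].
    - assert (Nat.div2 k = j) by (subst; apply Nat.div2_double). rewrite H1.
      replace k with (2 * j)%nat by lia. replace (2 * j)%nat with (j * 2)%nat by lia.
      unfold Rdiv. apply Rle_trans with (mu_w ^ (j * 2) * 1). lra. apply Rmult_le_compat_l. apply pow_le; lra.
      rewrite <- Rinv_1. apply Rinv_le_contravar; lra.
    - assert (Nat.div2 k = j) by (subst; replace (2 * j + 1)%nat with (S (2 * j)) by lia; apply Nat.div2_succ_double). rewrite H1.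
      replace k with (S (j * 2)) by lia. rewrite <- tech_pow_Rmult. replace (2*j)%nat with (j*2)%nat by lia. right. field. lra. }
  destruct (Nat.Even_or_Odd k) as [[j Hj]|[j Hj]].
  - assert (Nat.div2 k = j) by (subst; apply Nat.div2_double). rewrite H1 in *. rewrite <- Hj in O1.
    eapply dbound_mono. eapply dbound_of_osc; [|exact O1]. lia.
    replace (IZR (4 * Z.of_nat n) / mu_w * mu_w ^ k * d) with ((mu_w ^ k / mu_w) * (IZR (4 * Z.of_nat n) * d)) by (field; lra).
    apply Rmult_le_compat_r; auto.
  - assert (Nat.div2 k = j) by (subst; replace (2 * j + 1)%nat with (S (2 * j)) by lia; apply Nat.div2_succ_double). rewrite H1 in *. rewrite <- Hj in O2.
    eapply dbound_mono. eapply dbound_of_osc; [|exact O2]. lia.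
    replace (IZR (4 * Z.of_nat n) / mu_w * mu_w ^ k * d) with ((mu_w ^ k / mu_w) * (IZR (4 * Z.of_nat n) * d)) by (field; lra).
    apply Rmult_le_compat_r; auto. Qed.

End Window.

Lemma sumZ_filter P l h : sumZ (filter P l) h = sumZ l (fun m => if P m then h m else 0).
Proof. induction l; simpl. reflexivity. destruct (P a); simpl; rewrite IHl; lra. Qed.

Lemma sumZ_map_seq g s c h : sumZ (map g (seq s c)) h = ssum c (fun k => h (g (s + k)%nat)).
Proof. revert s. induction c; intros s. reflexivity. simpl seq. simpl map. unfold sumZ in *. simpl fold_right.
  rewrite IHc. rewrite ssum_shift1. rewrite Nat.add_0_r. f_equal. apply ssum_ext. intros. f_equal. f_equal. lia. Qed.

Lemma up_lam n lam : 2 * INR n - 1 < lam < 2 * INR n -> up lam = (2 * Z.of_nat n)%Z.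
Proof. intros H. symmetry. apply tech_up; rewrite mult_IZR, <- INR_IZR_INZ; simpl; lra. Qed.

Lemma IZR_2n1 n : IZR (2 * Z.of_nat n - 1) = 2 * INR n - 1.
Proof. rewrite minus_IZR, mult_IZR, <- INR_IZR_INZ. simpl. ring. Qed.

Section Mset.
Variable n : nat.
Hypothesis Hn : (1 <= n)%nat.
Variable lam : R.
Hypothesis Hlam : 2 * INR n - 1 < lam < 2 * INR n.

Lemma in_range m : (Z.abs m <= 2 * Z.of_nat n - 1)%Z -> Rabs (IZR m) < lam.
Proof. intros H. rewrite Rabs_Zabs. apply IZR_le in H. rewrite IZR_2n1 in H. lra. Qed.

Lemma out_range m : (Z.abs m = 2 * Z.of_nat n)%Z -> ~ Rabs (IZR m) < lam.
Proof. intros H. rewrite Rabs_Zabs, H, mult_IZR, <- INR_IZR_INZ. simpl. lra. Qed.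

Lemma sum_Mset_gen i h : sumZ (Mset lam i) h =
  ssum (4 * n + 1) (fun k => if andb ((Z.of_nat k - 2 * Z.of_nat n) mod 2 =? i)%Z (if Rlt_dec (Rabs (IZR (Z.of_nat k - 2 * Z.of_nat n))) lam then true else false)
                              then h (Z.of_nat k - 2 * Z.of_nat n)%Z else 0).
Proof. unfold Mset. rewrite sumZ_filter. unfold zrange. rewrite sumZ_map_seq. rewrite (up_lam n lam Hlam).
  replace (Z.to_nat (2 * (2 * Z.of_nat n) + 1)) with (4 * n + 1)%nat by lia. apply ssum_ext. intros. reflexivity. Qed.

Lemma split41 G : ssum (4 * n + 1) G = G 0%nat + ssum (2 * n) (fun t => G (2 * t + 1)%nat + G (2 * t + 2)%nat).
Proof. replace (4 * n + 1)%nat with (S (2 * (2 * n))) by lia. rewrite ssum_shift1, ssum_pairs. f_equal.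
  apply ssum_ext. intros. f_equal; f_equal; lia. Qed.

Lemma Rlt_true x y : x < y -> (if Rlt_dec x y then true else false) = true.
Proof. intros H. destruct (Rlt_dec x y); [reflexivity|contradiction]. Qed.
Lemma Rlt_false x y : ~ x < y -> (if Rlt_dec x y then true else false) = false.
Proof. intros H. destruct (Rlt_dec x y); [contradiction|reflexivity]. Qed.

Lemma sum_Mset1 h : sumZ (Mset lam 1) h = ssum (2 * n) (fun t => h (2 * Z.of_nat t + 1 - 2 * Z.of_nat n)%Z).
Proof. rewrite sum_Mset_gen, split41.
  rewrite (Rlt_false _ _ (out_range (Z.of_nat 0 - 2 * Z.of_nat n) ltac:(lia))).
  rewrite andb_false_r. rewrite Rplus_0_l. apply ssum_ext. intros t Ht.
  rewrite (Rlt_true _ _ (in_range (Z.of_nat (2 * t + 1) - 2 * Z.of_nat n) ltac:(lia))).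
  replace ((Z.of_nat (2 * t + 1) - 2 * Z.of_nat n) mod 2 =? 1)%Z with true.
  2:{ symmetry. apply Z.eqb_eq. Z.div_mod_to_equations. lia. }
  replace ((Z.of_nat (2 * t + 2) - 2 * Z.of_nat n) mod 2 =? 1)%Z with false.
  2:{ symmetry. apply Z.eqb_neq. Z.div_mod_to_equations. lia. }
  rewrite andb_true_l, andb_false_l. rewrite Rplus_0_r. f_equal. lia. Qed.

Lemma sum_Mset0 h : sumZ (Mset lam 0) h = ssum (2 * n) (fun t => if (t <? 2 * n - 1)%nat then h (2 * Z.of_nat t + 2 - 2 * Z.of_nat n)%Z else 0).
Proof. rewrite sum_Mset_gen, split41.
  rewrite (Rlt_false _ _ (out_range (Z.of_nat 0 - 2 * Z.of_nat n) ltac:(lia))).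
  rewrite andb_false_r. rewrite Rplus_0_l. apply ssum_ext. intros t Ht.
  replace ((Z.of_nat (2 * t + 1) - 2 * Z.of_nat n) mod 2 =? 0)%Z with false.
  2:{ symmetry. apply Z.eqb_neq. Z.div_mod_to_equations. lia. }
  replace ((Z.of_nat (2 * t + 2) - 2 * Z.of_nat n) mod 2 =? 0)%Z with true.
  2:{ symmetry. apply Z.eqb_eq. Z.div_mod_to_equations. lia. }
  rewrite andb_true_l, andb_false_l, Rplus_0_l.
  destruct (Nat.ltb_spec t (2 * n - 1)).
  - rewrite (Rlt_true _ _ (in_range (Z.of_nat (2 * t + 2) - 2 * Z.of_nat n) ltac:(lia))). f_equal. lia.
  - rewrite (Rlt_false _ _ (out_range (Z.of_nat (2 * t + 2) - 2 * Z.of_nat n) ltac:(lia))). reflexivity. Qed.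
End Mset.

Lemma sbp P c (f : Z -> R) L : ssum (S P) (fun t => c t * f (L + Z.of_nat t)%Z) =
  ssum (S P) c * f (L + Z.of_nat P)%Z - ssum P (fun t => ssum (S t) c * Dz f (L + Z.of_nat t)%Z).
Proof. induction P.
  - simpl. rewrite Z.add_0_r. ring.
  - rewrite ssum_S, IHP. rewrite (ssum_S P (fun t => ssum (S t) c * Dz f (L + Z.of_nat t)%Z)).
    rewrite (ssum_S (S P) c). unfold Dz. replace (L + Z.of_nat P + 1)%Z with (L + Z.of_nat (S P))%Z by lia. ring. Qed.

Lemma moment N F : (forall t, (t < N)%nat -> F t = F (N - 1 - t)%nat) ->
  ssum N (fun t => INR t * F t) = (INR N - 1) / 2 * ssum N F.
Proof. intros H. assert (E : ssum N (fun t => INR t * F t) = ssum N (fun t => (INR N - 1 - INR t) * F t)).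
  { rewrite ssum_rev. apply ssum_ext. intros t Ht. rewrite <- H by auto. rewrite !minus_INR by lia. simpl. ring. }
  assert (E2 : 2 * ssum N (fun t => INR t * F t) = (INR N - 1) * ssum N F).
  { replace (2 * ssum N (fun t => INR t * F t)) with (ssum N (fun t => INR t * F t) + ssum N (fun t => (INR N - 1 - INR t) * F t)) by (rewrite <- E; ring).
    rewrite <- ssum_plus, <- ssum_scal. apply ssum_ext. intros; ring. }
  lra. Qed.

Section Scheme.
Variables (phi : R -> R) (lam : R) (n : nat).
Hypothesis Hn : (2 <= n)%nat.
Hypothesis Hlam : 2 * INR n - 1 < lam < 2 * INR n.
Definition vK (K : nat) := wgt phi lam (Z.of_nat K - (2 * Z.of_nat n - 1)).
Hypothesis Hvpos : forall K, (K <= 4 * n - 2)%nat -> 0 < vK K.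

Lemma vK_sym K : (K <= 4 * n - 2)%nat -> vK K = vK (4 * n - 2 - K).
Proof. intros H. unfold vK, wgt. f_equal. f_equal.
  replace (Z.of_nat (4 * n - 2 - K) - (2 * Z.of_nat n - 1))%Z with (- (Z.of_nat K - (2 * Z.of_nat n - 1)))%Z by lia.
  rewrite opp_IZR, Rabs_Ropp. reflexivity. Qed.

Definition We := ssum (2 * n - 1) (fun u => vK (2 * u + 1)).
Definition Wo := ssum (2 * n) (fun u => vK (2 * u)).
Lemma We_pos : 0 < We. Proof. unfold We. apply ssum_pos. lia. intros; apply Hvpos; lia. Qed.
Lemma Wo_pos : 0 < Wo. Proof. unfold Wo. apply ssum_pos. lia. intros; apply Hvpos; lia. Qed.

Definition alpha t := vK (2 * t + 1) / We.
Definition beta t := vK (2 * t) / Wo.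
Definition sig0 t := if (t <? 2 * n - 1)%nat then alpha t else 0.
Definition sig (i : Z) t := if (i =? 0)%Z then sig0 t else beta t.
Definition Srep (f : zseq) : zseq := fun k => ssum (2 * n) (fun t => sig (k mod 2)%Z t * f (k / 2 - Z.of_nat n + 1 + Z.of_nat t)%Z).

Lemma sum_alpha : ssum (2 * n - 1) alpha = 1.
Proof. unfold alpha. unfold Rdiv. rewrite (ssum_ext _ _ (fun t => / We * vK (2 * t + 1))) by (intros; ring).
  rewrite ssum_scal. fold We. pose proof We_pos. field. lra. Qed.
Lemma sum_beta : ssum (2 * n) beta = 1.
Proof. unfold beta. unfold Rdiv. rewrite (ssum_ext _ _ (fun t => / Wo * vK (2 * t))) by (intros; ring).
  rewrite ssum_scal. fold Wo. pose proof Wo_pos. field. lra. Qed.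
Lemma sum_sig0 : ssum (2 * n) sig0 = 1.
Proof. replace (2 * n)%nat with (S (2 * n - 1)) by lia. rewrite ssum_S. unfold sig0 at 2.
  rewrite (proj2 (Nat.ltb_ge _ _)) by lia. rewrite Rplus_0_r. rewrite <- sum_alpha. apply ssum_ext.
  intros t Ht. unfold sig0. rewrite (proj2 (Nat.ltb_lt _ _)) by lia. reflexivity. Qed.

Lemma alpha_pos t : (t < 2 * n - 1)%nat -> 0 < alpha t.
Proof. intros. unfold alpha. apply Rdiv_lt_0_compat. apply Hvpos; lia. apply We_pos. Qed.
Lemma beta_pos t : (t < 2 * n)%nat -> 0 < beta t.
Proof. intros. unfold beta. apply Rdiv_lt_0_compat. apply Hvpos; lia. apply Wo_pos. Qed.

Lemma sig_conv i : (i = 0 \/ i = 1)%Z -> convex (2 * n) (sig i).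
Proof. intros [->| ->]; unfold sig; simpl.
  - split. intros t Ht. unfold sig0. destruct (Nat.ltb_spec t (2*n-1)). left; apply alpha_pos; auto. lra. apply sum_sig0.
  - split. intros t Ht. left; apply beta_pos; auto. apply sum_beta. Qed.

Lemma S1_repr f k : S1 phi lam f k = Srep f k.
Proof. unfold S1, Srep. cbv zeta. destruct (mod2_cases k) as [E|E]; rewrite E.
  - rewrite (sum_Mset0 n ltac:(lia) lam Hlam). rewrite (sum_Mset0 n ltac:(lia) lam Hlam).
    assert (Den : ssum (2 * n) (fun t => if (t <? 2 * n - 1)%nat then wgt phi lam (2 * Z.of_nat t + 2 - 2 * Z.of_nat n) else 0) = We).
    { replace (2 * n)%nat with (S (2 * n - 1)) by lia. rewrite ssum_S.
      rewrite (proj2 (Nat.ltb_ge _ _)) by lia. rewrite Rplus_0_r. unfold We. apply ssum_ext. intros t Ht.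
      rewrite (proj2 (Nat.ltb_lt _ _)) by lia. unfold vK. f_equal. lia. }
    rewrite Den. unfold Rdiv. rewrite Rmult_comm, <- ssum_scal. apply ssum_ext. intros t Ht.
    unfold sig. simpl Z.eqb. cbv iota. unfold sig0, alpha. destruct (Nat.ltb_spec t (2*n-1)).
    + replace (k / 2 + (2 * Z.of_nat t + 2 - 2 * Z.of_nat n + 0) / 2)%Z with (k / 2 - Z.of_nat n + 1 + Z.of_nat t)%Z by (Z.div_mod_to_equations; lia).
      replace (wgt phi lam (2 * Z.of_nat t + 2 - 2 * Z.of_nat n)) with (vK (2 * t + 1)) by (unfold vK; f_equal; lia).
      unfold Rdiv. ring.
    + ring.
  - rewrite (sum_Mset1 n ltac:(lia) lam Hlam). rewrite (sum_Mset1 n ltac:(lia) lam Hlam).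
    assert (Den : ssum (2 * n) (fun t => wgt phi lam (2 * Z.of_nat t + 1 - 2 * Z.of_nat n)) = Wo).
    { unfold Wo. apply ssum_ext. intros t Ht. unfold vK. f_equal. lia. }
    rewrite Den. unfold Rdiv. rewrite Rmult_comm, <- ssum_scal. apply ssum_ext. intros t Ht.
    unfold sig. simpl Z.eqb. cbv iota. unfold beta.
    replace (k / 2 + (2 * Z.of_nat t + 1 - 2 * Z.of_nat n + 1) / 2)%Z with (k / 2 - Z.of_nat n + 1 + Z.of_nat t)%Z by (Z.div_mod_to_equations; lia).
    replace (wgt phi lam (2 * Z.of_nat t + 1 - 2 * Z.of_nat n)) with (vK (2 * t)) by (unfold vK; f_equal; lia).
    unfold Rdiv. ring. Qed.

Definition tau (i : Z) (t : nat) : R :=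
  if (i =? 0)%Z then 2 * (ssum (S t) alpha - ssum (S t) beta) else 2 * (ssum (S t) beta - ssum t alpha).

Definition gam t := match t with O => 0 | S u => alpha u end.

Lemma HSD_rep f k : Dz (Srep f) k = / 2 * Tw n tau (Dz f) k.
Proof. unfold Dz at 1. unfold Srep, Tw. set (L := (k / 2 - Z.of_nat n + 1)%Z).
  destruct (mod2_cases k) as [E|E].
  - assert (E1 : ((k + 1) mod 2 = 1)%Z) by (Z.div_mod_to_equations; lia).
    assert (E2 : ((k + 1) / 2 = k / 2)%Z) by (Z.div_mod_to_equations; lia).
    rewrite E, E1, E2. fold L. unfold sig. simpl Z.eqb. cbv iota.
    rewrite <- ssum_minus. rewrite (ssum_ext _ _ (fun t => (beta t - sig0 t) * f (L + Z.of_nat t)%Z)) by (intros; ring).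
    replace (2 * n)%nat with (S (2 * n - 1)) by lia. rewrite sbp.
    replace (ssum (S (2 * n - 1)) (fun t => beta t - sig0 t)) with 0.
    2:{ rewrite ssum_minus. replace (S (2 * n - 1)) with (2 * n)%nat by lia. rewrite sum_beta, sum_sig0. ring. }
    rewrite Rmult_0_l, Rminus_0_l. replace (S (2 * n - 1) - 1)%nat with (2 * n - 1)%nat by lia.
    rewrite ssum_opp, <- ssum_scal. apply ssum_ext. intros t Ht.
    unfold tau. simpl Z.eqb. cbv iota.
    rewrite ssum_minus. rewrite (ssum_ext (S t) sig0 alpha). field.
    intros u Hu. unfold sig0. rewrite (proj2 (Nat.ltb_lt _ _)) by lia. reflexivity.
  - assert (E1 : ((k + 1) mod 2 = 0)%Z) by (Z.div_mod_to_equations; lia).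
    assert (E2 : ((k + 1) / 2 = k / 2 + 1)%Z) by (Z.div_mod_to_equations; lia).
    rewrite E, E1, E2. fold L. unfold sig. simpl Z.eqb. cbv iota.
    assert (R1 : ssum (2 * n) (fun t => sig0 t * f (k / 2 + 1 - Z.of_nat n + 1 + Z.of_nat t)%Z) = ssum (2 * n) (fun t => gam t * f (L + Z.of_nat t)%Z)).
    { replace (2 * n)%nat with (S (2 * n - 1)) by lia. rewrite ssum_S, ssum_shift1. simpl gam.
      unfold sig0 at 2. rewrite (proj2 (Nat.ltb_ge _ _)) by lia. rewrite Rmult_0_l, Rmult_0_l, Rplus_0_r, Rplus_0_l.
      apply ssum_ext. intros t Ht. unfold sig0. rewrite (proj2 (Nat.ltb_lt _ _)) by lia. f_equal. f_equal. unfold L. lia. }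
    rewrite R1. rewrite <- ssum_minus. rewrite (ssum_ext _ _ (fun t => (gam t - beta t) * f (L + Z.of_nat t)%Z)) by (intros; ring).
    replace (2 * n)%nat with (S (2 * n - 1)) by lia. rewrite sbp.
    replace (ssum (S (2 * n - 1)) (fun t => gam t - beta t)) with 0.
    2:{ rewrite ssum_minus. rewrite ssum_shift1. simpl gam. replace (S (2 * n - 1)) with (2 * n)%nat by lia. rewrite sum_beta.
        rewrite (ssum_ext _ (fun t => gam (S t)) alpha) by (intros; reflexivity). rewrite sum_alpha. ring. }
    rewrite Rmult_0_l, Rminus_0_l. replace (S (2 * n - 1) - 1)%nat with (2 * n - 1)%nat by lia.
    rewrite ssum_opp, <- ssum_scal. apply ssum_ext. intros t Ht.
    unfold tau. simpl Z.eqb. cbv iota.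
    rewrite ssum_minus. rewrite ssum_shift1. simpl gam.
    rewrite (ssum_ext _ (fun u => gam (S u)) alpha) by (intros; reflexivity). field. Qed.

Lemma alpha_sym t : (t < 2 * n - 1)%nat -> alpha t = alpha (2 * n - 1 - 1 - t)%nat.
Proof. intros H. unfold alpha. f_equal. rewrite vK_sym by lia. f_equal. lia. Qed.
Lemma beta_sym t : (t < 2 * n)%nat -> beta t = beta (2 * n - 1 - t)%nat.
Proof. intros H. unfold beta. f_equal. rewrite vK_sym by lia. f_equal. lia. Qed.

Lemma tau_sum i : (i = 0 \/ i = 1)%Z -> ssum (2 * n - 1) (tau i) = 1.
Proof. intros Hi. pose (f := fun l : Z => IZR l).
  assert (Df1 : forall l, Dz f l = 1) by (intros; unfold Dz, f; rewrite plus_IZR; ring).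
  assert (M1 : ssum (2 * n - 1) (fun t => INR t * alpha t) = INR n - 1).
  { rewrite moment by apply alpha_sym. rewrite sum_alpha, minus_INR by lia. rewrite mult_INR. simpl. lra. }
  assert (M2 : ssum (2 * n) (fun t => INR t * beta t) = INR n - 1/2).
  { rewrite moment by apply beta_sym. rewrite sum_beta, mult_INR. simpl. lra. }
  assert (Sa : forall c, ssum (2 * n) (fun t => sig0 t * f (c + Z.of_nat t)%Z) = IZR c + INR n - 1).
  { intros c. replace (2 * n)%nat with (S (2 * n - 1)) by lia. rewrite ssum_S. unfold sig0 at 2.
    rewrite (proj2 (Nat.ltb_ge _ _)) by lia. rewrite Rmult_0_l, Rplus_0_r.
    rewrite (ssum_ext _ _ (fun t => IZR c * alpha t + INR t * alpha t)).
    rewrite ssum_plus, ssum_scal, sum_alpha, M1. ring.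
    intros t Ht. unfold sig0, f. rewrite (proj2 (Nat.ltb_lt _ _)) by lia. rewrite plus_IZR, <- INR_IZR_INZ. ring. }
  assert (Sb : forall c, ssum (2 * n) (fun t => beta t * f (c + Z.of_nat t)%Z) = IZR c + INR n - 1/2).
  { intros c. rewrite (ssum_ext _ _ (fun t => IZR c * beta t + INR t * beta t)).
    rewrite ssum_plus, ssum_scal, sum_beta, M2. ring.
    intros t Ht. unfold f. rewrite plus_IZR, <- INR_IZR_INZ. ring. }
  destruct Hi as [->| ->].
  - pose proof (HSD_rep f 0%Z) as H. unfold Dz at 1, Srep, Tw in H.
    replace ((0 + 1) mod 2)%Z with 1%Z in H by reflexivity. replace (0 mod 2)%Z with 0%Z in H by reflexivity.
    replace ((0 + 1) / 2)%Z with 0%Z in H by reflexivity. replace (0 / 2)%Z with 0%Z in H by reflexivity.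
    rewrite (ssum_ext _ (fun t => tau 0 t * Dz f _) (tau 0)) in H by (intros; rewrite Df1; ring).
    change (sig 1) with beta in H. change (sig 0) with sig0 in H.
    rewrite Sa, Sb in H. rewrite !plus_IZR, !minus_IZR, <- INR_IZR_INZ in H. lra.
  - pose proof (HSD_rep f 1%Z) as H. unfold Dz at 1, Srep, Tw in H.
    replace ((1 + 1) mod 2)%Z with 0%Z in H by reflexivity. replace (1 mod 2)%Z with 1%Z in H by reflexivity.
    replace ((1 + 1) / 2)%Z with 1%Z in H by reflexivity. replace (1 / 2)%Z with 0%Z in H by reflexivity.
    rewrite (ssum_ext _ (fun t => tau 1 t * Dz f _) (tau 1)) in H by (intros; rewrite Df1; ring).
    change (sig 1) with beta in H. change (sig 0) with sig0 in H.
    rewrite Sa, Sb in H. rewrite !plus_IZR, !minus_IZR, <- INR_IZR_INZ in H. lra. Qed.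

End Scheme.

Lemma ssum_prod N M F G : ssum N F * ssum M G = ssum N (fun a => ssum M (fun b => F a * G b)).
Proof. induction N; simpl. ring. rewrite <- IHN. rewrite (ssum_scal M (F N) G). ring. Qed.

Lemma ssum_le2 N M F G : (forall a b, (a < N)%nat -> (b < M)%nat -> F a b <= G a b) ->
  ssum N (fun a => ssum M (fun b => F a b)) <= ssum N (fun a => ssum M (fun b => G a b)).
Proof. intros H. apply ssum_le. intros a Ha. apply ssum_le. intros b Hb. apply H; auto. Qed.

Lemma finite_min N F : (forall t, (t < N)%nat -> 0 < F t) -> exists th, 0 < th /\ forall t, (t < N)%nat -> th <= F t.
Proof. induction N; intros H. exists 1. split. lra. intros; lia.
  destruct IHN as [th [H1 H2]]. intros; apply H; lia. exists (Rmin th (F N)). split.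
  apply Rmin_pos; auto. intros t Ht. destruct (Nat.eq_dec t N). subst. apply Rmin_r.
  eapply Rle_trans. apply Rmin_l. apply H2. lia. Qed.

Section Pos.
Variables (phi : R -> R) (lam : R) (n : nat).
Hypothesis Hn : (2 <= n)%nat.
Hypothesis Hlam : 2 * INR n - 1 < lam < 2 * INR n.
Notation v := (vK phi lam n).
Hypothesis Hvpos : forall K, (K <= 4 * n - 2)%nat -> 0 < v K.
Hypothesis Hlc3 : forall k, (1 <= k)%nat -> (k + 1 <= 4 * n - 2)%nat -> v (k - 1) * v (k + 1) <= v k * v k.

Lemma ratio_mono d i : (i + 1 + d <= 4 * n - 2)%nat -> v (i + 1 + d) / v (i + d) <= v (i + 1) / v i.
Proof. induction d; intros H.
  - rewrite !Nat.add_0_r. lra.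
  - eapply Rle_trans; [|apply IHd; lia].
    pose proof (Hlc3 (i + 1 + d) ltac:(lia) ltac:(lia)).
    replace (i + 1 + d - 1)%nat with (i + d)%nat in H0 by lia.
    replace (i + 1 + d + 1)%nat with (i + 1 + S d)%nat in H0 by lia.
    replace (i + S d)%nat with (i + 1 + d)%nat by lia.
    assert (0 < v (i + d)) by (apply Hvpos; lia). assert (0 < v (i + 1 + d)) by (apply Hvpos; lia).
    assert (0 < v (i + 1 + S d)) by (apply Hvpos; lia).
    apply Rmult_le_reg_r with (v (i + 1 + d) * v (i + d)). nra.
    field_simplify; try lra; nra. Qed.

Lemma LC i j : (i + 1 <= j - 1)%nat -> (j <= 4 * n - 2)%nat -> v i * v j <= v (i + 1) * v (j - 1).
Proof. intros H1 H2. pose proof (ratio_mono (j - 1 - i) i ltac:(lia)).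
  replace (i + 1 + (j - 1 - i))%nat with j in H by lia. replace (i + (j - 1 - i))%nat with (j - 1)%nat in H by lia.
  assert (0 < v i) by (apply Hvpos; lia). assert (0 < v (j - 1)) by (apply Hvpos; lia).
  apply Rmult_le_compat_r with (r := v i * v (j - 1)) in H; [|nra].
  replace (v j / v (j - 1) * (v i * v (j - 1))) with (v i * v j) in H by (field; lra).
  replace (v (i + 1) / v i * (v i * v (j - 1))) with (v (i + 1) * v (j - 1)) in H by (field; lra). exact H. Qed.

Lemma key0 t : (t < 2 * n - 1)%nat ->
  0 < ssum (S t) (fun u => v (2 * u + 1)) * Wo phi lam n - ssum (S t) (fun u => v (2 * u)) * We phi lam n.
Proof. intros Ht. set (r := (2 * n - 2 - t)%nat).
  set (OL := ssum (S t) (fun u => v (2 * u + 1))). set (EL := ssum (S t) (fun u => v (2 * u))).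
  set (ER := ssum r (fun b => v (2 * (S t + b)))). set (OR := ssum r (fun b => v (2 * (S t + b) + 1))).
  assert (HWo : Wo phi lam n = EL + ER + v (4 * n - 2)).
  { unfold Wo. replace (2 * n)%nat with (S t + S r)%nat by lia. rewrite ssum_add, (ssum_S r). fold EL. fold ER.
    replace (2 * (S t + r))%nat with (4 * n - 2)%nat by lia. ring. }
  assert (HWe : We phi lam n = OL + OR).
  { unfold We. replace (2 * n - 1)%nat with (S t + r)%nat by lia. rewrite ssum_add. reflexivity. }
  assert (Hcmp : EL * OR <= OL * ER).
  { unfold EL, OR, OL, ER. rewrite !ssum_prod. apply ssum_le2. intros a b Ha Hb.
    pose proof (LC (2 * a) (2 * (S t + b) + 1) ltac:(lia) ltac:(lia)).
    replace (2 * a + 1)%nat with (2 * a + 1)%nat in H by reflexivity.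
    replace (2 * (S t + b) + 1 - 1)%nat with (2 * (S t + b))%nat in H by lia. exact H. }
  assert (0 < OL) by (apply ssum_pos; [lia|intros; apply Hvpos; lia]).
  assert (0 < v (4 * n - 2)) by (apply Hvpos; lia).
  rewrite HWo, HWe. nra. Qed.

Lemma key1 t : (t < 2 * n - 1)%nat ->
  0 < ssum (S t) (fun u => v (2 * u)) * We phi lam n - ssum t (fun u => v (2 * u + 1)) * Wo phi lam n.
Proof. intros Ht. set (r := (2 * n - 1 - t)%nat).
  set (OL := ssum t (fun u => v (2 * u + 1))). set (EL := ssum (S t) (fun u => v (2 * u))).
  set (ER := ssum r (fun b => v (2 * (S t + b)))). set (OR := ssum r (fun b => v (2 * (t + b) + 1))).
  assert (HWo : Wo phi lam n = EL + ER).
  { unfold Wo. replace (2 * n)%nat with (S t + r)%nat by lia. rewrite ssum_add. reflexivity. }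
  assert (HWe : We phi lam n = OL + OR).
  { unfold We. replace (2 * n - 1)%nat with (t + r)%nat by lia. rewrite ssum_add. reflexivity. }
  assert (HEL : EL = v 0 + ssum t (fun a => v (2 * S a))).
  { unfold EL. rewrite ssum_shift1. reflexivity. }
  assert (Hcmp : OL * ER <= ssum t (fun a => v (2 * S a)) * OR).
  { unfold OL, OR, ER. rewrite !ssum_prod. apply ssum_le2. intros a b Ha Hb.
    pose proof (LC (2 * a + 1) (2 * (S t + b)) ltac:(lia) ltac:(lia)).
    replace (2 * a + 1 + 1)%nat with (2 * S a)%nat in H by lia.
    replace (2 * (S t + b) - 1)%nat with (2 * (t + b) + 1)%nat in H by lia. exact H. }
  assert (0 < OR) by (apply ssum_pos; [lia|intros; apply Hvpos; lia]).
  assert (0 < v 0) by (apply Hvpos; lia).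
  rewrite HWo, HWe, HEL. nra. Qed.

Lemma ssum_alpha_eq m : ssum m (alpha phi lam n) = ssum m (fun u => v (2 * u + 1)) / We phi lam n.
Proof. unfold alpha, Rdiv. rewrite Rmult_comm, <- ssum_scal. apply ssum_ext; intros; ring. Qed.
Lemma ssum_beta_eq m : ssum m (beta phi lam n) = ssum m (fun u => v (2 * u)) / Wo phi lam n.
Proof. unfold beta, Rdiv. rewrite Rmult_comm, <- ssum_scal. apply ssum_ext; intros; ring. Qed.

Lemma tau_pos i t : (i = 0 \/ i = 1)%Z -> (t < 2 * n - 1)%nat -> 0 < tau phi lam n i t.
Proof. intros Hi Ht. pose proof (We_pos phi lam n Hn Hvpos). pose proof (Wo_pos phi lam n Hn Hvpos).
  unfold tau. rewrite ssum_alpha_eq, ssum_beta_eq. destruct Hi as [->| ->]; simpl Z.eqb; cbv iota.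
  - pose proof (key0 t Ht). try rewrite ssum_alpha_eq.
    replace (ssum (S t) (fun u => v (2 * u + 1)) / We phi lam n - ssum (S t) (fun u => v (2 * u)) / Wo phi lam n)
      with ((ssum (S t) (fun u => v (2 * u + 1)) * Wo phi lam n - ssum (S t) (fun u => v (2 * u)) * We phi lam n) / (We phi lam n * Wo phi lam n)) by (field; lra).
    apply Rmult_lt_0_compat. lra. apply Rdiv_lt_0_compat; nra.
  - pose proof (key1 t Ht). try rewrite ssum_alpha_eq.
    replace (ssum (S t) (fun u => v (2 * u)) / Wo phi lam n - ssum t (fun u => v (2 * u + 1)) / We phi lam n)
      with ((ssum (S t) (fun u => v (2 * u)) * We phi lam n - ssum t (fun u => v (2 * u + 1)) * Wo phi lam n) / (We phi lam n * Wo phi lam n)) by (field; lra).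
    apply Rmult_lt_0_compat. lra. apply Rdiv_lt_0_compat; nra. Qed.

Theorem scheme_C1 : C1_scheme (S1 phi lam).
Proof.
  destruct (finite_min (2 * n - 1) (fun t => Rmin (tau phi lam n 0 t) (tau phi lam n 1 t))) as [th0 [Hth0 Hth0']].
  { intros t Ht. apply Rmin_pos; apply tau_pos; auto. }
  set (th := Rmin th0 (1/2)).
  assert (Hth : 0 < th <= 1/2) by (unfold th; split; [apply Rmin_pos; lra|apply Rmin_r]).
  assert (Hconv : forall i, (i = 0 \/ i = 1)%Z -> convex (2 * n - 1) (tau phi lam n i)).
  { intros i Hi. split. intros t Ht. left. apply tau_pos; auto. apply tau_sum; auto. }
  assert (Hpos : forall i t, (i = 0 \/ i = 1)%Z -> (t < 2 * n - 1)%nat -> th <= tau phi lam n i t).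
  { intros i t Hi Ht. specialize (Hth0' t Ht). unfold th. eapply Rle_trans. apply Rmin_l.
    eapply Rle_trans. exact Hth0'. destruct Hi as [->| ->]. apply Rmin_l. apply Rmin_r. }
  pose proof (Hmu_w th Hth) as Hmu.
  apply (partB (S1 phi lam) (Tw n (tau phi lam n)) (INR n) (INR n) (IZR (4 * Z.of_nat n) / mu_w th) (mu_w th)).
  - apply pos_INR.
  - apply pos_INR.
  - apply Rdiv_le_0_compat. apply IZR_le; lia. lra.
  - exact Hmu.
  - intros f d Hd i. rewrite (S1_repr phi lam n) by auto. unfold Srep.
    rewrite conv_sub by (apply sig_conv; auto; apply mod2_cases). apply conv_bound. apply sig_conv; auto; apply mod2_cases.
    intros t Ht. eapply Rle_trans. apply dist_bound; eauto. apply Rmult_le_compat_r. apply (dbound_nonneg f d Hd).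
    rewrite INR_IZR_INZ. apply IZR_le. lia.
  - intros f k. unfold Dz. rewrite !(S1_repr phi lam n) by auto. apply HSD_rep; auto.
  - intros; apply Tw_ext; auto.
  - intros; apply Tw_scal.
  - intros; eapply Tw_T0; eauto.
  - intros; eapply Tw_T1; eauto.
  - intros g d Hg k. eapply Tw_T2; eauto. Qed.
End Pos.

Lemma exp_le_1 u : u <= 0 -> exp u <= 1.
Proof. intros H. destruct H. left. rewrite <- exp_0. apply exp_increasing. auto. subst. rewrite exp_0. lra. Qed.
Lemma exp_ge_1 u : 0 <= u -> 1 <= exp u.
Proof. intros H. destruct H. left. rewrite <- exp_0. apply exp_increasing. auto. subst. rewrite exp_0. lra. Qed.

Lemma Rpower_le1 c r : 0 < c <= 1 -> 0 <= r -> Rpower c r <= 1.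
Proof. intros Hc Hr. unfold Rpower. apply exp_le_1.
  assert (ln c <= 0). { destruct (Req_dec c 1). subst. rewrite ln_1. lra. left. rewrite <- ln_1. apply ln_increasing; lra. } nra. Qed.
Lemma Rpower_ge1 c r : 1 <= c -> 0 <= r -> 1 <= Rpower c r.
Proof. intros Hc Hr. unfold Rpower. apply exp_ge_1.
  assert (0 <= ln c). { destruct (Req_dec c 1). subst. rewrite ln_1. lra. left. rewrite <- ln_1. apply ln_increasing; lra. } nra. Qed.
Lemma Rpower_lt1 c r : 0 < c < 1 -> 0 < r -> Rpower c r < 1.
Proof. intros Hc Hr. unfold Rpower. rewrite <- exp_0. apply exp_increasing.
  assert (ln c < 0) by (rewrite <- ln_1; apply ln_increasing; lra). nra. Qed.

Lemma bernoulli_pos p u : 1 <= p -> 0 < u -> 1 + p * (u - 1) <= Rpower u p.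
Proof. intros Hp Hu. set (f := fun x => Rpower x p - 1 - p * (x - 1)).
  assert (Hd : forall c, 0 < c -> derivable_pt_lim f c (p * Rpower c (p - 1) - p)).
  { intros c Hc. unfold f. replace (p * Rpower c (p - 1) - p) with (p * Rpower c (p - 1) - 0 - p * (1 - 0)) by ring.
    apply derivable_pt_lim_minus. apply derivable_pt_lim_minus. apply derivable_pt_lim_power; auto. apply derivable_pt_lim_const.
    apply derivable_pt_lim_scal. apply derivable_pt_lim_minus. apply derivable_pt_lim_id. apply derivable_pt_lim_const. }
  assert (f 1 = 0) by (unfold f, Rpower; rewrite ln_1, Rmult_0_r, exp_0; lra).
  cut (0 <= f u). unfold f; lra.
  destruct (Rtotal_order u 1) as [Hl|[He|Hg]].
  - destruct (MVT_cor2 f (fun c => p * Rpower c (p - 1) - p) u 1 Hl) as [c [Hc1 Hc2]].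
    intros c Hc. apply Hd. lra.
    assert (Rpower c (p - 1) <= 1) by (apply Rpower_le1; lra).
    assert (p * Rpower c (p - 1) - p <= 0) by nra. assert ((p * Rpower c (p - 1) - p) * (1 - u) <= 0) by nra. lra.
  - subst. lra.
  - destruct (MVT_cor2 f (fun c => p * Rpower c (p - 1) - p) 1 u Hg) as [c [Hc1 Hc2]].
    intros c Hc. apply Hd. lra.
    assert (1 <= Rpower c (p - 1)) by (apply Rpower_ge1; lra).
    assert (0 <= p * Rpower c (p - 1) - p) by nra. assert (0 <= (p * Rpower c (p - 1) - p) * (u - 1)) by nra. lra. Qed.

Lemma Rpower_base1 y : Rpower 1 y = 1.
Proof. unfold Rpower. rewrite ln_1, Rmult_0_r, exp_0. reflexivity. Qed.

Lemma rpow_nonneg x p : 0 <= rpow x p.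
Proof. unfold rpow. destruct (Rle_dec x 0). lra. left; apply exp_pos. Qed.

Lemma rpow_pos x p : 0 < x -> rpow x p = Rpower x p.
Proof. intros. unfold rpow. destruct (Rle_dec x 0). lra. reflexivity. Qed.

Lemma rpow_zero x p : x <= 0 -> rpow x p = 0.
Proof. intros. unfold rpow. destruct (Rle_dec x 0). reflexivity. lra. Qed.

Lemma bernoulli p s : 1 <= p -> -1 <= s -> 1 + p * s <= rpow (1 + s) p.
Proof. intros Hp Hs. destruct (Req_dec s (-1)). subst. rewrite rpow_zero by lra. nra.
  rewrite rpow_pos by lra. pose proof (bernoulli_pos p (1 + s) Hp ltac:(lra)). replace (1 + s - 1) with s in H0 by ring. exact H0. Qed.

Lemma rpow_mult m z p : 0 < m -> 0 <= z -> rpow (m * z) p = Rpower m p * rpow z p.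
Proof. intros Hm Hz. destruct Hz as [Hz| <-].
  - rewrite !rpow_pos; try nra. rewrite Rpower_mult_distr; auto.
  - rewrite Rmult_0_r, !rpow_zero by lra. ring. Qed.

Lemma rpow_mono a b p : 0 < p -> 0 <= a <= b -> rpow a p <= rpow b p.
Proof. intros Hp [Ha Hab]. destruct Ha as [Ha| <-].
  - rewrite !rpow_pos by lra. apply Rle_Rpower_l; lra.
  - rewrite (rpow_zero 0) by lra. apply rpow_nonneg. Qed.

Lemma rpow_convex a b p : 1 <= p -> 0 <= a -> 0 <= b -> rpow ((a + b) / 2) p <= (rpow a p + rpow b p) / 2.
Proof. intros Hp Ha Hb. set (m := (a + b) / 2).
  destruct (Req_dec m 0) as [Hm|Hm].
  { assert (a = 0) by (unfold m in Hm; lra). assert (b = 0) by (unfold m in Hm; lra). subst.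
    rewrite Hm, !rpow_zero by lra. lra. }
  assert (Hm' : 0 < m) by (unfold m in *; lra).
  set (s := (b - a) / (2 * m)).
  assert (Em : 2 * m = a + b) by (unfold m; field).
  assert (Ea : a = m * (1 - s)) by (replace (m * (1 - s)) with (m - (b - a)/2) by (unfold s; field; lra); lra).
  assert (Eb : b = m * (1 + s)) by (replace (m * (1 + s)) with (m + (b - a)/2) by (unfold s; field; lra); lra).
  assert (Hs : -1 <= s <= 1).
  { assert (E2 : s * (2 * m) = b - a) by (unfold s; field; lra). split; nra. }
  rewrite Ea, Eb. rewrite !rpow_mult by lra.
  replace m with (m * 1) at 1 by ring. rewrite rpow_mult by lra. rewrite rpow_pos with (x := 1) by lra. rewrite Rpower_base1.
  pose proof (bernoulli p s Hp ltac:(lra)). pose proof (bernoulli p (-s) Hp ltac:(lra)).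
  replace (1 + - s) with (1 - s) in H0 by ring.
  assert (0 < Rpower m p) by apply exp_pos. nra. Qed.

Lemma U_lc p y h : 1 <= p -> 0 < h -> Rabs (y - h) < 1 -> Rabs (y + h) < 1 -> Rabs y < 1 ->
  (1 - rpow (Rabs (y - h)) p) * (1 - rpow (Rabs (y + h)) p) <= (1 - rpow (Rabs y) p) * (1 - rpow (Rabs y) p).
Proof. intros Hp Hh H1 H2 H3.
  set (A := rpow (Rabs (y - h)) p). set (B := rpow (Rabs (y + h)) p). set (Cc := rpow (Rabs y) p).
  assert (Hy : Rabs y <= (Rabs (y - h) + Rabs (y + h)) / 2).
  { replace y with (((y - h) + (y + h)) / 2) at 1 by field. rewrite Rabs_div by lra. rewrite (Rabs_pos_eq 2) by lra.
    apply Rmult_le_compat_r. lra. apply Rabs_triang. }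
  assert (HC : Cc <= (A + B) / 2).
  { unfold Cc. eapply Rle_trans. apply rpow_mono. lra. split. apply Rabs_pos. exact Hy.
    apply rpow_convex; auto; apply Rabs_pos. }
  assert (HA : A < 1). { unfold A. destruct (Req_dec (Rabs (y - h)) 0) as [E|E]. rewrite E, rpow_zero; lra.
    rewrite rpow_pos. apply Rpower_lt1. pose proof (Rabs_pos (y - h)). lra. lra. pose proof (Rabs_pos (y - h)). lra. }
  assert (HB : B < 1). { unfold B. destruct (Req_dec (Rabs (y + h)) 0) as [E|E]. rewrite E, rpow_zero; lra.
    rewrite rpow_pos. apply Rpower_lt1. pose proof (Rabs_pos (y + h)). lra. lra. pose proof (Rabs_pos (y + h)). lra. }
  assert (0 <= A) by apply rpow_nonneg. assert (0 <= B) by apply rpow_nonneg.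
  assert (0 <= 1 - (A + B) / 2) by lra.
  assert ((1 - (A + B)/2) * (1 - (A + B)/2) <= (1 - Cc) * (1 - Cc)) by nra.
  assert ((1 - (A + B)/2) * (1 - (A + B)/2) - (1 - A) * (1 - B) = (A - B) * (A - B) / 4) by field. assert (0 <= (A - B) * (A - B)) by apply Rle_0_sqr. lra. Qed.

Section Weights.
Variables (lam : R) (n : nat).
Hypothesis Hn : (2 <= n)%nat.
Hypothesis Hlam : 2 * INR n - 1 < lam < 2 * INR n.

Lemma lam_pos : 0 < lam.
Proof. assert (2 <= INR n) by (replace 2 with (INR 2) by (simpl; ring); apply le_INR; lia). lra. Qed.

Lemma x_range K : (K <= 4 * n - 2)%nat -> Rabs (IZR (Z.of_nat K - (2 * Z.of_nat n - 1))) / lam < 1.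
Proof. intros H. pose proof lam_pos. apply Rmult_lt_reg_r with lam; auto. unfold Rdiv. rewrite Rmult_assoc, Rinv_l by lra.
  rewrite Rmult_1_r, Rmult_1_l. apply (in_range n lam Hlam). lia. Qed.

Lemma const_ok : (forall K, (K <= 4 * n - 2)%nat -> 0 < vK (fun _ => 1) lam n K) /\
  (forall k, (1 <= k)%nat -> (k + 1 <= 4 * n - 2)%nat -> vK (fun _ => 1) lam n (k - 1) * vK (fun _ => 1) lam n (k + 1) <= vK (fun _ => 1) lam n k * vK (fun _ => 1) lam n k).
Proof. unfold vK, wgt. split; intros; lra. Qed.

Variables p q : R.
Hypothesis Hp : 1 <= p.
Hypothesis Hq : 0 < q.
Let phi := fun x => rpow (1 - rpow x p) q.

Lemma U_pos x : 0 <= x < 1 -> 0 < 1 - rpow x p.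
Proof. intros [H1 H2]. destruct H1 as [H1| <-]. rewrite rpow_pos by auto. pose proof (Rpower_lt1 x p ltac:(lra) ltac:(lra)). lra.
  rewrite rpow_zero by lra. lra. Qed.

Lemma pow_ok : (forall K, (K <= 4 * n - 2)%nat -> 0 < vK phi lam n K) /\
  (forall k, (1 <= k)%nat -> (k + 1 <= 4 * n - 2)%nat -> vK phi lam n (k - 1) * vK phi lam n (k + 1) <= vK phi lam n k * vK phi lam n k).
Proof. pose proof lam_pos as Hl.
  assert (Hx : forall K, (K <= 4 * n - 2)%nat -> 0 <= Rabs (IZR (Z.of_nat K - (2 * Z.of_nat n - 1))) / lam < 1).
  { intros K HK. split. apply Rdiv_le_0_compat; auto. apply Rabs_pos. apply x_range; auto. }
  split.
  - intros K HK. unfold vK, wgt, phi. rewrite rpow_pos by (apply U_pos; auto). apply exp_pos.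
  - intros k Hk1 Hk2. unfold vK, wgt, phi.
    pose proof (U_pos _ (Hx (k - 1)%nat ltac:(lia))). pose proof (U_pos _ (Hx (k + 1)%nat ltac:(lia))). pose proof (U_pos _ (Hx k ltac:(lia))).
    rewrite (rpow_pos _ q H), (rpow_pos _ q H0), (rpow_pos _ q H1). rewrite !Rpower_mult_distr by auto. apply Rle_Rpower_l. lra. split. nra.
    set (y := IZR (Z.of_nat k - (2 * Z.of_nat n - 1)) / lam).
    assert (E1 : Rabs (IZR (Z.of_nat (k - 1) - (2 * Z.of_nat n - 1))) / lam = Rabs (y - / lam)).
    { unfold y. replace (Z.of_nat (k - 1) - (2 * Z.of_nat n - 1))%Z with ((Z.of_nat k - (2 * Z.of_nat n - 1)) - 1)%Z by lia.
      rewrite minus_IZR. replace ((IZR (Z.of_nat k - (2 * Z.of_nat n - 1)) - 1)) with ((IZR (Z.of_nat k - (2 * Z.of_nat n - 1)) / lam - / lam) * lam) by (field; lra).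
      rewrite Rabs_mult, (Rabs_pos_eq lam) by lra. field. lra. }
    assert (E2 : Rabs (IZR (Z.of_nat (k + 1) - (2 * Z.of_nat n - 1))) / lam = Rabs (y + / lam)).
    { unfold y. replace (Z.of_nat (k + 1) - (2 * Z.of_nat n - 1))%Z with ((Z.of_nat k - (2 * Z.of_nat n - 1)) + 1)%Z by lia.
      rewrite plus_IZR. replace ((IZR (Z.of_nat k - (2 * Z.of_nat n - 1)) + 1)) with ((IZR (Z.of_nat k - (2 * Z.of_nat n - 1)) / lam + / lam) * lam) by (field; lra).
      rewrite Rabs_mult, (Rabs_pos_eq lam) by lra. field. lra. }
    assert (E0 : Rabs (IZR (Z.of_nat k - (2 * Z.of_nat n - 1))) / lam = Rabs y).
    { unfold y. rewrite Rabs_div by lra. rewrite (Rabs_pos_eq lam) by lra. reflexivity. }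
    pose proof (Hx (k - 1)%nat ltac:(lia)) as X1. pose proof (Hx (k + 1)%nat ltac:(lia)) as X2. pose proof (Hx k ltac:(lia)) as X0.
    rewrite E1 in *. rewrite E2 in *. rewrite E0 in *.
    apply U_lc; try lra. apply Rinv_0_lt_compat; lra. Qed.
End Weights.

Theorem corollary4p6 (n : nat) (lambda : R) (phi : R -> R) :
  (2 <= n)%nat ->
  2 * INR n - 1 < lambda < 2 * INR n ->
  (phi = (fun _ => 1) \/
   exists p q : R, 1 <= p /\ 0 < q /\ phi = (fun x => rpow (1 - rpow x p) q)) ->
  C1_scheme (S1 phi lambda).
Proof.
  intros Hn Hlam [-> | [p [q [Hp [Hq ->]]]]].
  - destruct (const_ok lambda n) as [A B]. exact (scheme_C1 _ lambda n Hn Hlam A B).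
  - destruct (pow_ok lambda n Hn Hlam p q Hp Hq) as [A B]. exact (scheme_C1 _ lambda n Hn Hlam A B).
Qed.
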